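(* There exist sequences $\{a_n\}_{n\ge1}\subset\mathbb C$, $\{\epsilon_n\}_{n\ge1}$ and $\{R_n\}_{n\ge1}$ of positive reals with $R_{n-1}<|a_n|<R_n$, together with a strictly decreasing sequence $\{\delta_n\}_{n\ge0}$ of positive reals with $\delta_0=1/4$, such that for every $n\ge1$, every holomorphic map $h\colon\overline{\mathbb C}\setminus\gamma_n^{-1}(\infty_2)\to\mathbb C^2$ with $\sup_{K_n}|\gamma_n-h|<\delta_n$ is an embedding on $K_{n-1}$, and $$\sup_{\overline{B_j(1/2)}}|f_n-\mathrm{id}|<\delta_j\cdot\frac1{2^{j+n}}\qquad\text{for all }0\le j<n.$$
   Context: $\overline{\mathbb C^2}=\mathbb C^2\cup\{\infty_2\}$. Set $D_n=\{|z|<R_n\}\subset\mathbb C$, $B_n=\overline D_n\times\overline D_n$ for $n\ge1$, and $B_0=\{(0,0)\}$. For $B\subset\mathbb C^2$ and $\alpha>0$, $B(\alpha)=\{z\in\mathbb C^2:\operatorname{dist}(z,B)<\alpha\}$ (Euclidean distance). Let $g_n(z)=\epsilon_n/(z-a_n)$, $f_n(x,y)=(x,y+g_n(x))$ for $n$ odd and $f_n(x,y)=(x+g_n(y),y)$ for $n$ even. Let $\gamma_n(z)=f_n\circ\cdots\circ f_1(z,0)$ for $z\in\mathbb C$, $\gamma_n(\infty)=\infty_2$, $K_n=\gamma_n^{-1}(B_n)\subset\overline{\mathbb C}$ for $n\ge1$, and $K_0=\emptyset$. Norms $|\cdot|$ on $\mathbb C^2$ are Euclidean. *)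

(* Defs.v *)
From Stdlib Require Import Reals.
From Coquelicot Require Import Coquelicot.
Open Scope R_scope.

Definition C2 : Type := (C * C)%type.

Definition norm2 (p : C2) : R :=
  sqrt (Cmod (fst p) ^ 2 + Cmod (snd p) ^ 2).

Definition sub2 (p q : C2) : C2 := (Cminus (fst p) (fst q), Cminus (snd p) (snd q)).

Definition Ceqb (u v : C) : bool :=
  if Req_EM_T (fst u) (fst v) then
    if Req_EM_T (snd u) (snd v) then true else false
  else false.

Definition gfun (eps : R) (a : C) (z : C) : C := Cdiv (RtoC eps) (Cminus z a).

(* f_n on C^2 with its singular line; [None] encodes the value infinity_2
   (the point z of the singular line is sent to infinity_2).
   n odd : (x,y) |-> (x, y + g_n(x));  n even : (x,y) |-> (x + g_n(y), y). *)
Definition fmap (n : nat) (a : C) (eps : R) (p : C2) : option C2 :=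
  let (x, y) := p in
  if Nat.odd n then
    (if Ceqb x a then None else Some (x, Cplus y (gfun eps a x)))
  else
    (if Ceqb y a then None else Some (Cplus x (gfun eps a y), y)).

(* gamma_n(z) = f_n o ... o f_1 (z, 0), for z in C, as a map into
   C^2 u {infinity_2} (None = infinity_2); gamma_n(infinity) = infinity_2
   is implicit: the point infinity of the Riemann sphere is never in K_n
   and always in gamma_n^{-1}(infinity_2). *)
Fixpoint gamma (a : nat -> C) (eps : nat -> R) (n : nat) (z : C) : option C2 :=
  match n with
  | O => Some (z, RtoC 0)
  | S m => match gamma a eps m z with
           | None => None
           | Some p => fmap (S m) (a (S m)) (eps (S m)) p
           end
  end.

Definition inB (Rs : nat -> R) (n : nat) (p : C2) : Prop :=
  match n with
  | O => p = (RtoC 0, RtoC 0)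
  | S _ => Cmod (fst p) <= Rs n /\ Cmod (snd p) <= Rs n
  end.

Definition inBnbhd (Rs : nat -> R) (n : nat) (alpha : R) (z : C2) : Prop :=
  exists b, inB Rs n b /\ norm2 (sub2 z b) < alpha.

Definition closure2 (S : C2 -> Prop) (z : C2) : Prop :=
  forall r, 0 < r -> exists w, S w /\ norm2 (sub2 z w) < r.

(* K_0 = empty, K_n = gamma_n^{-1}(B_n) (a subset of C since
   gamma_n(infinity) = infinity_2 is not in B_n) *)
Definition inK (a : nat -> C) (eps : nat -> R) (Rs : nat -> R) (n : nat) (z : C) : Prop :=
  match n with
  | O => False
  | S _ => exists p, gamma a eps n z = Some p /\ inB Rs n p
  end.

(* h : Cbar \ gamma_n^{-1}(infinity_2) -> C^2 holomorphic, i.e. both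
   coordinates complex differentiable at every z in C with gamma_n(z) finite *)
Definition holo_off_poles (a : nat -> C) (eps : nat -> R) (n : nat) (h : C -> C2) : Prop :=
  forall z : C, gamma a eps n z <> None ->
    ex_derive (fun w : C => fst (h w)) z /\ ex_derive (fun w : C => snd (h w)) z.

Definition embedding_on (K : C -> Prop) (h : C -> C2) : Prop :=
  (forall z w, K z -> K w -> h z = h w -> z = w) /\
  (forall z, K z -> exists l1 l2 : C,
      is_derive (fun w : C => fst (h w)) z l1 /\
      is_derive (fun w : C => snd (h w)) z l2 /\
      (l1, l2) <> (RtoC 0, RtoC 0)).

(* Main.v *)
Require Import Defs.
From Stdlib Require Import Reals.
From Coquelicot Require Import Coquelicot.
Open Scope R_scope.
From Stdlib Require Import Lra Lia Classical ClassicalEpsilon.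
Lemma Rabs_sq' (r : R) : Rabs r * (Rabs r * 1) = r * (r * 1).
Proof. rewrite !Rmult_1_r, <- Rabs_mult. apply Rabs_pos_eq. nra. Qed.
Lemma norm_CR (x : C) : @norm R_AbsRing C_R_NormedModule x = Cmod x.
Proof. destruct x as [a b]. unfold norm; simpl. unfold prod_norm, Cmod; simpl. unfold norm; simpl. unfold abs; simpl. rewrite !Rabs_sq'. reflexivity. Qed.
Lemma norm_CC (x : C) : @norm C_AbsRing C_NormedModule x = Cmod x.
Proof. reflexivity. Qed.

Lemma deriv_eps (F : C -> C) z l : is_derive F z l ->
  forall eps, 0 < eps -> exists del, 0 < del /\ forall w, Cmod (w - z) < del ->
    Cmod (F w - F z - l * (w - z)) <= eps * Cmod (w - z).
Proof.
  intros [_ Hd] eps Heps.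
  specialize (Hd z (fun P H => H) (mkposreal eps Heps)).
  destruct Hd as [del Hdel].
  exists del. split. apply cond_pos.
  intros w Hw. specialize (Hdel w Hw). simpl in Hdel.
  replace (l * (w - z))%C with (scal (minus w z) l). exact Hdel.
  unfold scal; simpl. unfold mult; simpl. apply Cmult_comm.
Qed.

Lemma fst_le_Cmod (c : C) : Rabs (fst c) <= Cmod c.
Proof. eapply Rle_trans; [apply Rmax_l | apply Rmax_Cmod]. Qed.
Lemma snd_le_Cmod (c : C) : Rabs (snd c) <= Cmod c.
Proof. eapply Rle_trans; [apply Rmax_r | apply Rmax_Cmod]. Qed.
Lemma Cmod_le_sum (c : C) : Cmod c <= Rabs (fst c) + Rabs (snd c).
Proof.
  destruct c as [a b]; unfold Cmod; simpl.
  apply Rsqr_incr_0_var.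
  - unfold Rsqr. rewrite sqrt_sqrt by nra.
    rewrite <- (Rabs_sq' a), <- (Rabs_sq' b).
    pose proof (Rabs_pos a); pose proof (Rabs_pos b). nra.
  - pose proof (Rabs_pos a); pose proof (Rabs_pos b). lra.
Qed.

Lemma exRInt_of_eps (f : R -> C) a b :
  (forall x, Rmin a b <= x <= Rmax a b -> forall eps, 0 < eps ->
     exists del, 0 < del /\ forall y, Rabs (y - x) < del -> Cmod (f y - f x) < eps) ->
  @ex_RInt C_R_CompleteNormedModule f a b.
Proof.
  intros H. apply ex_RInt_continuous. intros x Hx.
  apply filterlim_locally. intros eps.
  destruct (H x Hx eps (cond_pos eps)) as [del [Hdel Hy]].
  exists (mkposreal del Hdel). intros y Hb. simpl in Hb.
  specialize (Hy y Hb).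
  split; simpl; unfold ball; simpl; unfold AbsRing_ball, abs, minus, plus, opp; simpl.
  - eapply Rle_lt_trans; [|exact Hy].
    replace (fst (f y) + - fst (f x)) with (fst (f y - f x)%C) by (simpl; ring).
    apply fst_le_Cmod.
  - eapply Rle_lt_trans; [|exact Hy].
    replace (snd (f y) + - snd (f x)) with (snd (f y - f x)%C) by (simpl; ring).
    apply snd_le_Cmod.
Qed.

Lemma is_derive_of_eps (F : C -> C) z l :
  (forall eps, 0 < eps -> exists del, 0 < del /\ forall w, Cmod (w - z) < del ->
    Cmod (F w - F z - l * (w - z)) <= eps * Cmod (w - z)) -> is_derive F z l.
Proof.
  intros H. split.
  - apply is_linear_scal_l.
  - intros x Hx.
    apply (@is_filter_lim_locally_unique C_AbsRing (AbsRing_NormedModule C_AbsRing)) in Hx.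
    subst x.
    intros eps. destruct (H eps (cond_pos eps)) as [del [Hdel Hw]].
    exists (mkposreal del Hdel). intros w Hb. simpl.
    change (Cmod (F w - F z - (w - z) * l) <= eps * Cmod (w - z)).
    rewrite (Cmult_comm (w - z)). apply Hw. exact Hb.
Qed.

Lemma Cmod_sub_sym (a b : C) : Cmod (a - b) = Cmod (b - a).
Proof. replace (a - b)%C with (- (b - a))%C by ring. apply Cmod_opp. Qed.

Lemma cont_of_deriv (F : C -> C) z l : is_derive F z l ->
  forall eps, 0 < eps -> exists del, 0 < del /\ forall w, Cmod (w - z) < del ->
    Cmod (F w - F z) < eps.
Proof.
  intros Hd eps Heps. destruct (deriv_eps F z l Hd 1 Rlt_0_1) as [d1 [Hd1 H1]].
  pose proof (Cmod_ge_0 l).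
  exists (Rmin d1 (eps / (Cmod l + 1))). split.
  apply Rmin_pos; auto. apply Rdiv_lt_0_compat; lra.
  intros w Hw. pose proof (Rmin_l d1 (eps / (Cmod l + 1))). pose proof (Rmin_r d1 (eps / (Cmod l + 1))).
  specialize (H1 w ltac:(lra)).
  replace (F w - F z)%C with ((F w - F z - l * (w - z)) + l * (w - z))%C by ring.
  eapply Rle_lt_trans. apply Cmod_triangle. rewrite Cmod_mult.
  pose proof (Cmod_ge_0 (w - z)).
  assert (Hm : Rmin d1 (eps / (Cmod l + 1)) * (Cmod l + 1) <= eps).
  { apply Rle_trans with (eps / (Cmod l + 1) * (Cmod l + 1)).
    apply Rmult_le_compat_r; lra. right. field. lra. }
  assert (Cmod (w - z) * (Cmod l + 1) < eps) by nra.
  nra.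
Qed.

Lemma CN_AR (f : C -> C) x l : @is_derive C_AbsRing C_NormedModule f x l -> @is_derive C_AbsRing (AbsRing_NormedModule C_AbsRing) f x l.
Proof. intros [_ H]. split; [apply is_linear_scal_l|]. intros y Hy eps. exact (H y Hy eps). Qed.
Lemma AR_CN (f : C -> C) x l : @is_derive C_AbsRing (AbsRing_NormedModule C_AbsRing) f x l -> @is_derive C_AbsRing C_NormedModule f x l.
Proof. intros [_ H]. split; [apply is_linear_scal_l|]. intros y Hy eps. exact (H y Hy eps). Qed.
Lemma CD_plus (f g : C -> C) x a b : is_derive f x a -> is_derive g x b ->
  is_derive (fun z => f z + g z)%C x (a + b)%C.
Proof. intros Ha Hb. exact (@is_derive_plus C_AbsRing C_NormedModule f g x a b Ha Hb). Qed.
Lemma CD_minus (f g : C -> C) x a b : is_derive f x a -> is_derive g x b ->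
  is_derive (fun z => f z - g z)%C x (a - b)%C.
Proof. intros Ha Hb. exact (@is_derive_minus C_AbsRing C_NormedModule f g x a b Ha Hb). Qed.
Lemma CD_mult (f g : C -> C) x a b : is_derive f x a -> is_derive g x b ->
  is_derive (fun z => f z * g z)%C x (a * g x + f x * b)%C.
Proof. intros Ha Hb. apply AR_CN. exact (@is_derive_mult C_AbsRing f g x a b (CN_AR _ _ _ Ha) (CN_AR _ _ _ Hb) Cmult_comm). Qed.
Lemma CD_const (c : C) x : is_derive (fun _ : C => c) x (RtoC 0).
Proof. exact (@is_derive_const C_AbsRing C_NormedModule c x). Qed.
Lemma CD_id x : is_derive (fun z : C => z) x (RtoC 1).
Proof. apply AR_CN. exact (@is_derive_id C_AbsRing x). Qed.
Lemma CD_comp (f g : C -> C) x a b : is_derive f (g x) a -> is_derive g x b ->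
  is_derive (fun z => f (g z)) x (b * a)%C.
Proof. intros Ha Hb. exact (@is_derive_comp C_AbsRing C_NormedModule f g x a b Ha (CN_AR _ _ _ Hb)). Qed.
Lemma CD_ext (f g : C -> C) x a : (forall z, f z = g z) -> is_derive f x a -> is_derive g x a.
Proof. intros E H. apply (is_derive_ext f g); auto. Qed.

Lemma Cmod_pos_ne (c : C) : c <> 0%C -> 0 < Cmod c.
Proof. intros H. pose proof (Cmod_ge_0 c). destruct (Rle_lt_or_eq_dec 0 (Cmod c) H0); auto.
  exfalso. apply H. apply Cmod_eq_0. auto. Qed.

Lemma CD_inv0 (y : C) : y <> RtoC 0 -> is_derive Cinv y (- / (y * y))%C.
Proof.
  intros Hy. apply is_derive_of_eps. intros eps Heps.
  pose proof (Cmod_pos_ne y Hy) as Hm.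
  set (m := Cmod y) in *.
  exists (Rmin (m / 2) (eps * (m * m * m) / 2)). split.
  { apply Rmin_pos; [lra|]. apply Rdiv_lt_0_compat; [|lra]. apply Rmult_lt_0_compat; [lra|]. apply Rmult_lt_0_compat; nra. }
  intros w Hw. pose proof (Rmin_l (m / 2) (eps * (m * m * m) / 2)).
  pose proof (Rmin_r (m / 2) (eps * (m * m * m) / 2)).
  assert (Hwy : m / 2 <= Cmod w).
  { pose proof (Cmod_triangle w (y - w)) as T. replace (w + (y - w))%C with y in T by ring.
    rewrite (Cmod_sub_sym y w) in T. unfold m in *. lra. }
  assert (Hw0 : w <> RtoC 0). { intro E; subst. rewrite Cmod_0 in Hwy. lra. }
  replace (/ w - / y - - / (y * y) * (w - y))%C with ((w - y) * (w - y) / (w * (y * y)))%C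
    by (field; auto).
  rewrite Cmod_div by (apply Cmult_neq_0; auto; apply Cmult_neq_0; auto).
  rewrite !Cmod_mult. fold m.
  pose proof (Cmod_ge_0 (w - y)). set (d := Cmod (w - y)) in *.
  assert (Hd : d <= eps * (m * m * m) / 2) by lra.
  apply Rle_trans with (d * d * / (m / 2 * (m * m))).
  { unfold Rdiv. apply Rmult_le_compat_l. nra. apply Rinv_le_contravar. 
    apply Rmult_lt_0_compat; nra. apply Rmult_le_compat_r; nra. }
  assert (HK : 0 < / (m / 2 * (m * m))). { apply Rinv_0_lt_compat. apply Rmult_lt_0_compat; nra. }
  assert (HE : eps * (m * m * m) / 2 * / (m / 2 * (m * m)) = eps) by (field; lra).
  set (K := / (m / 2 * (m * m))) in *.
  assert (d * d * K <= d * (eps * (m * m * m) / 2) * K).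
  { apply Rmult_le_compat_r; [lra|]. apply Rmult_le_compat_l; lra. }
  assert (E2 : d * (eps * (m * m * m) / 2) * K = d * eps) by (rewrite Rmult_assoc, HE; ring).
  rewrite E2 in H2. rewrite Rmult_assoc. lra.
Qed.

Lemma CD_inv (f : C -> C) x a : is_derive f x a -> f x <> RtoC 0 ->
  is_derive (fun z => / f z)%C x (- a / (f x * f x))%C.
Proof.
  intros Ha Hf. eapply is_derive_ext with (f := fun z => Cinv (f z)). intros; reflexivity.
  replace (- a / (f x * f x))%C with (a * (- / (f x * f x)))%C by (field; auto).
  apply CD_comp; auto. apply CD_inv0; auto.
Qed.

Definition Hs (F : C -> C) (x1 x2 y : R) : C :=
  @RInt C_R_CompleteNormedModule (fun x => F (x, y)) x1 x2.
Definition Vs (F : C -> C) (x y1 y2 : R) : C :=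
  @RInt C_R_CompleteNormedModule (fun y => F (x, y)) y1 y2.
Definition J (F : C -> C) (x1 x2 y1 y2 : R) : C :=
  (Hs F x1 x2 y1 - Hs F x1 x2 y2 + Ci * (Vs F x2 y1 y2 - Vs F x1 y1 y2))%C.

Lemma Cmod_hpair (a b y : R) : Cmod ((a, y) - (b, y))%C = Rabs (a - b).
Proof. replace ((a, y) - (b, y))%C with (RtoC (a - b)). apply Cmod_R.
  unfold RtoC, Cminus, Cplus, Copp; simpl. f_equal; lra. Qed.
Lemma Cmod_vpair (a b x : R) : Cmod ((x, a) - (x, b))%C = Rabs (a - b).
Proof. replace ((x, a) - (x, b))%C with (Ci * RtoC (a - b))%C. rewrite Cmod_mult, Cmod_R.
  replace (Cmod Ci) with 1. lra. unfold Cmod, Ci; simpl. replace (0 * (0 * 1) + 1 * (1 * 1)) with 1 by lra. symmetry; apply sqrt_1.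
  unfold RtoC, Ci, Cmult, Cminus, Cplus, Copp; simpl. f_equal; lra. Qed.

Lemma exH (F : C -> C) x1 x2 y : (forall x, Rmin x1 x2 <= x <= Rmax x1 x2 -> ex_derive F (x, y)) ->
  @ex_RInt C_R_CompleteNormedModule (fun x => F (x, y)) x1 x2.
Proof.
  intros H. apply exRInt_of_eps. intros x Hx eps Heps.
  destruct (H x Hx) as [l Hl].
  destruct (cont_of_deriv F (x, y) l Hl eps Heps) as [del [Hdel Hw]].
  exists del. split; auto. intros x' Hx'. apply Hw. rewrite Cmod_hpair. auto.
Qed.
Lemma exV (F : C -> C) x y1 y2 : (forall y, Rmin y1 y2 <= y <= Rmax y1 y2 -> ex_derive F (x, y)) ->
  @ex_RInt C_R_CompleteNormedModule (fun y => F (x, y)) y1 y2.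
Proof.
  intros H. apply exRInt_of_eps. intros y Hy eps Heps.
  destruct (H y Hy) as [l Hl].
  destruct (cont_of_deriv F (x, y) l Hl eps Heps) as [del [Hdel Hw]].
  exists del. split; auto. intros y' Hy'. apply Hw. rewrite Cmod_vpair. auto.
Qed.

Definition DiffBd (F : C -> C) (x1 x2 y1 y2 : R) : Prop :=
  (forall x, x1 <= x <= x2 -> ex_derive F (x, y1) /\ ex_derive F (x, y2)) /\
  (forall y, y1 <= y <= y2 -> ex_derive F (x1, y) /\ ex_derive F (x2, y)).
Definition DiffRect (F : C -> C) (x1 x2 y1 y2 : R) : Prop :=
  forall x y, x1 <= x <= x2 -> y1 <= y <= y2 -> ex_derive F (x, y).

Lemma DiffRect_Bd (F : C -> C) x1 x2 y1 y2 : x1 <= x2 -> y1 <= y2 -> DiffRect F x1 x2 y1 y2 -> DiffBd F x1 x2 y1 y2.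
Proof. intros hx hy H. split; intros; split; apply H; lra. Qed.

Lemma Rmin_le_l a b : a <= b -> Rmin a b = a. Proof. intros; apply Rmin_left; auto. Qed.
Lemma Rmax_le_r a b : a <= b -> Rmax a b = b. Proof. intros; apply Rmax_right; auto. Qed.

Lemma exH' (F : C -> C) x1 x2 y : x1 <= x2 -> (forall x, x1 <= x <= x2 -> ex_derive F (x, y)) ->
  @ex_RInt C_R_CompleteNormedModule (fun x => F (x, y)) x1 x2.
Proof. intros h H. apply exH. rewrite Rmin_le_l, Rmax_le_r by auto. auto. Qed.
Lemma exV' (F : C -> C) x y1 y2 : y1 <= y2 -> (forall y, y1 <= y <= y2 -> ex_derive F (x, y)) ->
  @ex_RInt C_R_CompleteNormedModule (fun y => F (x, y)) y1 y2.
Proof. intros h H. apply exV. rewrite Rmin_le_l, Rmax_le_r by auto. auto. Qed.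

Lemma J_split_x (F : C -> C) x1 x2 x3 y1 y2 : x1 <= x2 -> x2 <= x3 -> y1 <= y2 ->
  DiffBd F x1 x2 y1 y2 -> DiffBd F x2 x3 y1 y2 ->
  J F x1 x3 y1 y2 = (J F x1 x2 y1 y2 + J F x2 x3 y1 y2)%C.
Proof.
  intros h12 h23 hy [B1 B2] [B3 B4].
  assert (I1 : @ex_RInt C_R_CompleteNormedModule (fun x => F (x, y1)) x1 x2)
    by (apply exH'; auto; intros x Hx; apply (B1 x Hx)).
  assert (I2 : @ex_RInt C_R_CompleteNormedModule (fun x => F (x, y1)) x2 x3)
    by (apply exH'; auto; intros x Hx; apply (B3 x Hx)).
  assert (I3 : @ex_RInt C_R_CompleteNormedModule (fun x => F (x, y2)) x1 x2)
    by (apply exH'; auto; intros x Hx; apply (B1 x Hx)).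
  assert (I4 : @ex_RInt C_R_CompleteNormedModule (fun x => F (x, y2)) x2 x3)
    by (apply exH'; auto; intros x Hx; apply (B3 x Hx)).
  unfold J, Hs.
  rewrite <- (RInt_Chasles _ x1 x2 x3 I1 I2).
  rewrite <- (RInt_Chasles _ x1 x2 x3 I3 I4).
  change plus with Cplus. ring.
Qed.

Lemma J_split_y (F : C -> C) x1 x2 y1 y2 y3 : x1 <= x2 -> y1 <= y2 -> y2 <= y3 ->
  DiffBd F x1 x2 y1 y2 -> DiffBd F x1 x2 y2 y3 ->
  J F x1 x2 y1 y3 = (J F x1 x2 y1 y2 + J F x1 x2 y2 y3)%C.
Proof.
  intros hx h12 h23 [B1 B2] [B3 B4].
  assert (I1 : @ex_RInt C_R_CompleteNormedModule (fun y => F (x1, y)) y1 y2)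
    by (apply exV'; auto; intros y Hy; apply (B2 y Hy)).
  assert (I2 : @ex_RInt C_R_CompleteNormedModule (fun y => F (x1, y)) y2 y3)
    by (apply exV'; auto; intros y Hy; apply (B4 y Hy)).
  assert (I3 : @ex_RInt C_R_CompleteNormedModule (fun y => F (x2, y)) y1 y2)
    by (apply exV'; auto; intros y Hy; apply (B2 y Hy)).
  assert (I4 : @ex_RInt C_R_CompleteNormedModule (fun y => F (x2, y)) y2 y3)
    by (apply exV'; auto; intros y Hy; apply (B4 y Hy)).
  unfold J, Vs.
  rewrite <- (RInt_Chasles _ y1 y2 y3 I1 I2).
  rewrite <- (RInt_Chasles _ y1 y2 y3 I3 I4).
  change plus with Cplus. ring.
Qed.

Notation CRI := C_R_CompleteNormedModule.

Lemma RInt_Cminus (f g : R -> C) a b : @ex_RInt CRI f a b -> @ex_RInt CRI g a b ->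
  @RInt CRI (fun x => f x - g x)%C a b = (@RInt CRI f a b - @RInt CRI g a b)%C.
Proof. intros Hf Hg. exact (@RInt_minus CRI f g a b Hf Hg). Qed.

Lemma RInt_Cplus (f g : R -> C) a b : @ex_RInt CRI f a b -> @ex_RInt CRI g a b ->
  @RInt CRI (fun x => f x + g x)%C a b = (@RInt CRI f a b + @RInt CRI g a b)%C.
Proof. intros Hf Hg. exact (@RInt_plus CRI f g a b Hf Hg). Qed.

Lemma is_RInt_Cmult (f : R -> C) a b I c : @is_RInt CRI f a b I ->
  @is_RInt CRI (fun x => c * f x)%C a b (c * I)%C.
Proof.
  intros H.
  pose proof (is_RInt_fct_extend_fst f a b I H) as H1.
  pose proof (is_RInt_fct_extend_snd f a b I H) as H2.
  destruct c as [c1 c2]. destruct I as [i1 i2]. simpl in H1, H2.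
  apply (is_RInt_fct_extend_pair (fun x => ((c1, c2) * f x)%C)); simpl.
  - apply (is_RInt_minus (V := R_NormedModule) (fun x => c1 * fst (f x)) (fun x => c2 * snd (f x)));
      apply (is_RInt_scal (V := R_NormedModule)); auto.
  - apply (is_RInt_plus (V := R_NormedModule) (fun x => c1 * snd (f x)) (fun x => c2 * fst (f x)));
      apply (is_RInt_scal (V := R_NormedModule)); auto.
Qed.

Lemma RInt_Cmult (f : R -> C) a b c : @ex_RInt CRI f a b ->
  @RInt CRI (fun x => c * f x)%C a b = (c * @RInt CRI f a b)%C.
Proof. intros [I HI]. rewrite (is_RInt_unique (V := CRI) f a b I HI).
  apply is_RInt_unique. apply is_RInt_Cmult; auto. Qed.

Lemma RInt_Cnorm (f : R -> C) a b M : a <= b -> @ex_RInt CRI f a b ->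
  (forall x, a <= x <= b -> Cmod (f x) <= M) -> Cmod (@RInt CRI f a b) <= (b - a) * M.
Proof.
  intros hab [I HI] HM. rewrite (is_RInt_unique (V := CRI) f a b I HI).
  rewrite <- norm_CR. apply (norm_RInt_le_const (V := C_R_NormedModule) f a b I M hab); auto.
  intros x Hx. rewrite norm_CR. auto.
Qed.

Lemma RInt_fst (f : R -> C) a b : @ex_RInt CRI f a b ->
  fst (@RInt CRI f a b) = RInt (fun x => fst (f x)) a b.
Proof. intros [I HI]. rewrite (is_RInt_unique (V := CRI) f a b I HI). symmetry. apply is_RInt_unique.
  apply (is_RInt_fct_extend_fst f a b I HI). Qed.
Lemma RInt_snd (f : R -> C) a b : @ex_RInt CRI f a b ->
  snd (@RInt CRI f a b) = RInt (fun x => snd (f x)) a b.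
Proof. intros [I HI]. rewrite (is_RInt_unique (V := CRI) f a b I HI). symmetry. apply is_RInt_unique.
  apply (is_RInt_fct_extend_snd f a b I HI). Qed.

Lemma alg_minus (a b c d a' b' c' d' : C) :
  (a - a' - (b - b') + Ci * (d - d' - (c - c')) = (a - b + Ci*(d - c)) - (a' - b' + Ci*(d' - c')))%C.
Proof. ring. Qed.
Lemma alg_plus (a b c d a' b' c' d' : C) :
  (a + a' - (b + b') + Ci * (d + d' - (c + c')) = (a - b + Ci*(d - c)) + (a' - b' + Ci*(d' - c')))%C.
Proof. ring. Qed.
Lemma alg_cmult (a b c d e : C) :
  (e * a - e * b + Ci * (e * d - e * c) = e * (a - b + Ci*(d - c)))%C.
Proof. ring. Qed.
Lemma exH_bd (F : C -> C) x1 x2 y1 y2 : x1 <= x2 -> DiffBd F x1 x2 y1 y2 ->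
  @ex_RInt CRI (fun x => F (x, y1)) x1 x2 /\ @ex_RInt CRI (fun x => F (x, y2)) x1 x2.
Proof. intros h [B1 _]. split; apply exH'; auto; intros x Hx; apply (B1 x Hx). Qed.
Lemma exV_bd (F : C -> C) x1 x2 y1 y2 : y1 <= y2 -> DiffBd F x1 x2 y1 y2 ->
  @ex_RInt CRI (fun y => F (x1, y)) y1 y2 /\ @ex_RInt CRI (fun y => F (x2, y)) y1 y2.
Proof. intros h [_ B2]. split; apply exV'; auto; intros y Hy; apply (B2 y Hy). Qed.

Lemma J_minus (F G : C -> C) x1 x2 y1 y2 : x1 <= x2 -> y1 <= y2 ->
  DiffBd F x1 x2 y1 y2 -> DiffBd G x1 x2 y1 y2 ->
  J (fun z => F z - G z)%C x1 x2 y1 y2 = (J F x1 x2 y1 y2 - J G x1 x2 y1 y2)%C.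
Proof.
  intros hx hy BF BG.
  destruct (exH_bd F x1 x2 y1 y2 hx BF) as [F1 F2].
  destruct (exV_bd F x1 x2 y1 y2 hy BF) as [F3 F4].
  destruct (exH_bd G x1 x2 y1 y2 hx BG) as [G1 G2].
  destruct (exV_bd G x1 x2 y1 y2 hy BG) as [G3 G4].
  unfold J, Hs, Vs.
  rewrite (RInt_Cminus (fun x => F (x, y1)) (fun x => G (x, y1))) by auto.
  rewrite (RInt_Cminus (fun x => F (x, y2)) (fun x => G (x, y2))) by auto.
  rewrite (RInt_Cminus (fun y => F (x1, y)) (fun y => G (x1, y))) by auto.
  rewrite (RInt_Cminus (fun y => F (x2, y)) (fun y => G (x2, y))) by auto.
  apply alg_minus.
Qed.

Lemma J_plus (F G : C -> C) x1 x2 y1 y2 : x1 <= x2 -> y1 <= y2 ->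
  DiffBd F x1 x2 y1 y2 -> DiffBd G x1 x2 y1 y2 ->
  J (fun z => F z + G z)%C x1 x2 y1 y2 = (J F x1 x2 y1 y2 + J G x1 x2 y1 y2)%C.
Proof.
  intros hx hy BF BG.
  destruct (exH_bd F x1 x2 y1 y2 hx BF) as [F1 F2].
  destruct (exV_bd F x1 x2 y1 y2 hy BF) as [F3 F4].
  destruct (exH_bd G x1 x2 y1 y2 hx BG) as [G1 G2].
  destruct (exV_bd G x1 x2 y1 y2 hy BG) as [G3 G4].
  unfold J, Hs, Vs.
  rewrite (RInt_Cplus (fun x => F (x, y1)) (fun x => G (x, y1))) by auto.
  rewrite (RInt_Cplus (fun x => F (x, y2)) (fun x => G (x, y2))) by auto.
  rewrite (RInt_Cplus (fun y => F (x1, y)) (fun y => G (x1, y))) by auto.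
  rewrite (RInt_Cplus (fun y => F (x2, y)) (fun y => G (x2, y))) by auto.
  apply alg_plus.
Qed.

Lemma J_cmult (F : C -> C) c x1 x2 y1 y2 : x1 <= x2 -> y1 <= y2 ->
  DiffBd F x1 x2 y1 y2 ->
  J (fun z => c * F z)%C x1 x2 y1 y2 = (c * J F x1 x2 y1 y2)%C.
Proof.
  intros hx hy BF.
  destruct (exH_bd F x1 x2 y1 y2 hx BF) as [F1 F2].
  destruct (exV_bd F x1 x2 y1 y2 hy BF) as [F3 F4].
  unfold J, Hs, Vs.
  rewrite !RInt_Cmult by auto.
  apply alg_cmult.
Qed.

Lemma Cmod_J_aux (a b c d : C) : Cmod (a - b + Ci * (c - d))%C <= Cmod a + Cmod b + Cmod c + Cmod d.
Proof.
  eapply Rle_trans. apply Cmod_triangle. rewrite Cmod_mult.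
  replace (Cmod Ci) with 1. 2:{ unfold Cmod, Ci; simpl. replace (0 * (0 * 1) + 1 * (1 * 1)) with 1 by lra. symmetry; apply sqrt_1. }
  pose proof (Cmod_triangle a (- b)). pose proof (Cmod_triangle c (- d)). rewrite Cmod_opp in *.
  unfold Cminus. lra.
Qed.

Lemma J_bound (F : C -> C) x1 x2 y1 y2 M : x1 <= x2 -> y1 <= y2 ->
  DiffBd F x1 x2 y1 y2 ->
  (forall x, x1 <= x <= x2 -> Cmod (F (x, y1)) <= M /\ Cmod (F (x, y2)) <= M) ->
  (forall y, y1 <= y <= y2 -> Cmod (F (x1, y)) <= M /\ Cmod (F (x2, y)) <= M) ->
  Cmod (J F x1 x2 y1 y2) <= 2 * ((x2 - x1) + (y2 - y1)) * M.
Proof.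
  intros hx hy BF HM1 HM2.
  destruct (exH_bd F x1 x2 y1 y2 hx BF) as [F1 F2].
  destruct (exV_bd F x1 x2 y1 y2 hy BF) as [F3 F4].
  unfold J. eapply Rle_trans. apply Cmod_J_aux.
  unfold Hs, Vs.
  pose proof (RInt_Cnorm _ x1 x2 M hx F1 (fun x Hx => proj1 (HM1 x Hx))).
  pose proof (RInt_Cnorm _ x1 x2 M hx F2 (fun x Hx => proj2 (HM1 x Hx))).
  pose proof (RInt_Cnorm _ y1 y2 M hy F4 (fun y Hy => proj2 (HM2 y Hy))).
  pose proof (RInt_Cnorm _ y1 y2 M hy F3 (fun y Hy => proj1 (HM2 y Hy))).

  lra.
Qed.

Lemma J_affine (al be : C) x1 x2 y1 y2 :
  J (fun z => al + be * z)%C x1 x2 y1 y2 = RtoC 0.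
Proof.
  unfold J, Hs, Vs.
  assert (E : forall (f : R -> C) a b, @ex_RInt CRI f a b) .
  Abort.

Lemma ex_derive_affine (al be : C) z : ex_derive (fun w => al + be * w)%C z.
Proof. eexists. apply CD_plus. apply CD_const. apply CD_mult. apply CD_const. apply CD_id. Qed.

Lemma DiffRect_affine al be x1 x2 y1 y2 : DiffRect (fun w => al + be * w)%C x1 x2 y1 y2.
Proof. intros x y _ _. apply ex_derive_affine. Qed.

Lemma J_affine (al be : C) x1 x2 y1 y2 : x1 <= x2 -> y1 <= y2 ->
  J (fun z => al + be * z)%C x1 x2 y1 y2 = RtoC 0.
Proof.
  intros hx hy.
  pose proof (DiffRect_Bd _ x1 x2 y1 y2 hx hy (DiffRect_affine al be x1 x2 y1 y2)) as BF.
  destruct (exH_bd _ x1 x2 y1 y2 hx BF) as [F1 F2].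
  destruct (exV_bd _ x1 x2 y1 y2 hy BF) as [F3 F4].
  unfold J, Hs, Vs.
  replace (@RInt CRI (fun x => al + be * (x, y1))%C x1 x2 - @RInt CRI (fun x => al + be * (x, y2))%C x1 x2)%C
    with (@RInt CRI (fun x => (al + be * (x, y1)) - (al + be * (x, y2)))%C x1 x2)
    by (apply RInt_Cminus; auto).
  replace (@RInt CRI (fun y => al + be * (x2, y))%C y1 y2 - @RInt CRI (fun y => al + be * (x1, y))%C y1 y2)%C
    with (@RInt CRI (fun y => (al + be * (x2, y)) - (al + be * (x1, y)))%C y1 y2)
    by (apply RInt_Cminus; auto).
  rewrite (RInt_ext (V := CRI) (fun x => (al + be * (x, y1)) - (al + be * (x, y2)))%C (fun _ => Cmult be (0, y1 - y2))).
  2:{ intros x _. apply injective_projections; destruct be as [b1 b2]; destruct al as [a1 a2]; unfold Cmult, Cplus, Cminus, Copp; simpl; ring. }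
  rewrite (RInt_ext (V := CRI) (fun y => (al + be * (x2, y)) - (al + be * (x1, y)))%C (fun _ => Cmult be (x2 - x1, 0))).
  2:{ intros x _. apply injective_projections; destruct be as [b1 b2]; destruct al as [a1 a2]; unfold Cmult, Cplus, Cminus, Copp; simpl; ring. }
  rewrite !RInt_const. destruct be as [b1 b2]. apply injective_projections; unfold scal; simpl; unfold prod_scal, Cmult, Cplus, Ci, RtoC; simpl;
  unfold scal; simpl; unfold mult; simpl; ring.
Qed.

Record rect := mkR { rx1 : R; rx2 : R; ry1 : R; ry2 : R }.
Definition mxr (q : rect) := (rx1 q + rx2 q) / 2.
Definition myr (q : rect) := (ry1 q + ry2 q) / 2.
Definition quad (q : rect) (i j : bool) : rect :=
  mkR (if i then mxr q else rx1 q) (if i then rx2 q else mxr q)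
      (if j then myr q else ry1 q) (if j then ry2 q else myr q).
Definition JR F q := J F (rx1 q) (rx2 q) (ry1 q) (ry2 q).
Definition DR F q := DiffRect F (rx1 q) (rx2 q) (ry1 q) (ry2 q).
Definition valid q := rx1 q <= rx2 q /\ ry1 q <= ry2 q.

Lemma alg4 (a b c d : C) : (a + c + (b + d) = a + b + c + d)%C.
Proof. ring. Qed.
Lemma DiffRect_sub F a b c d a' b' c' d' : a <= a' -> b' <= b -> c <= c' -> d' <= d ->
  DiffRect F a b c d -> DiffRect F a' b' c' d'.
Proof. intros h1 h2 h3 h4 H x y Hx Hy. apply H; lra. Qed.

Lemma DB_sub F a b c d a' b' c' d' : a <= a' -> a' <= b' -> b' <= b -> c <= c' -> c' <= d' -> d' <= d ->
  DiffRect F a b c d -> DiffBd F a' b' c' d'.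
Proof. intros. apply DiffRect_Bd; try lra. eapply DiffRect_sub; [| | | |eassumption]; lra. Qed.

Lemma J_quad F q : valid q -> DR F q ->
  JR F q = (JR F (quad q false false) + JR F (quad q true false) + JR F (quad q false true) + JR F (quad q true true))%C.
Proof.
  intros [hx hy] HD. unfold JR, quad, DR, mxr, myr in *; simpl.
  set (x1 := rx1 q) in *; set (x2 := rx2 q) in *; set (y1 := ry1 q) in *; set (y2 := ry2 q) in *.
  set (xm := (x1 + x2) / 2). set (ym := (y1 + y2) / 2).
  assert (h1 : x1 <= xm) by (unfold xm; lra). assert (h2 : xm <= x2) by (unfold xm; lra).
  assert (h3 : y1 <= ym) by (unfold ym; lra). assert (h4 : ym <= y2) by (unfold ym; lra).
  rewrite (J_split_x F x1 xm x2 y1 y2 h1 h2 hy) by (apply (DB_sub F x1 x2 y1 y2); auto; lra).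
  rewrite (J_split_y F x1 xm y1 ym y2 h1 h3 h4) by (apply (DB_sub F x1 x2 y1 y2); auto; lra).
  rewrite (J_split_y F xm x2 y1 ym y2 h2 h3 h4) by (apply (DB_sub F x1 x2 y1 y2); auto; lra).
  apply alg4.
Qed.

Lemma quad_exists F q : exists p : bool * bool,
  valid q -> DR F q -> Cmod (JR F q) <= 4 * Cmod (JR F (quad q (fst p) (snd p))).
Proof.
  destruct (classic (exists p : bool * bool, Cmod (JR F q) <= 4 * Cmod (JR F (quad q (fst p) (snd p))))) as [[p Hp]|Hn].
  - exists p. auto.
  - exists (false, false). intros hv hd. exfalso.
    assert (A : forall p : bool * bool, 4 * Cmod (JR F (quad q (fst p) (snd p))) < Cmod (JR F q)).
    { intros p. apply Rnot_le_lt. intro. apply Hn. exists p. auto. }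
    pose proof (A (false, false)); pose proof (A (true, false)); pose proof (A (false, true)); pose proof (A (true, true)).
    simpl in *. rewrite (J_quad F q hv hd) in *.
    set (a := JR F (quad q false false)) in *. set (b := JR F (quad q true false)) in *.
    set (c := JR F (quad q false true)) in *. set (d := JR F (quad q true true)) in *.
    pose proof (Cmod_triangle (a + b + c)%C d). pose proof (Cmod_triangle (a + b)%C c).
    pose proof (Cmod_triangle a b). lra.
Qed.

Definition pick F q : bool * bool := proj1_sig (constructive_indefinite_description _ (quad_exists F q)).
Lemma pick_spec F q : valid q -> DR F q -> Cmod (JR F q) <= 4 * Cmod (JR F (quad q (fst (pick F q)) (snd (pick F q)))).
Proof. unfold pick. destruct (constructive_indefinite_description _ (quad_exists F q)) as [p Hp]. simpl. auto. Qed.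

Fixpoint seqR F q (k : nat) : rect :=
  match k with
  | O => q
  | S k => let q' := seqR F q k in quad q' (fst (pick F q')) (snd (pick F q'))
  end.

Lemma quad_prop q i j : valid q ->
  rx1 q <= rx1 (quad q i j) /\ rx2 (quad q i j) <= rx2 q /\
  ry1 q <= ry1 (quad q i j) /\ ry2 (quad q i j) <= ry2 q /\
  rx2 (quad q i j) - rx1 (quad q i j) = (rx2 q - rx1 q) / 2 /\
  ry2 (quad q i j) - ry1 (quad q i j) = (ry2 q - ry1 q) / 2.
Proof. intros [h1 h2]. destruct i, j; unfold quad, mxr, myr; simpl; repeat split; lra. Qed.

Lemma quad_DR F q i j : valid q -> DR F q -> DR F (quad q i j).
Proof. intros hv HD. destruct (quad_prop q i j hv) as (a & b & c & d & e & f).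
  unfold DR in *. eapply DiffRect_sub; [| | | |exact HD]; lra. Qed.

Lemma pow4 k : 4 ^ k = 2 ^ k * 2 ^ k.
Proof. induction k; simpl. lra. rewrite IHk. ring. Qed.

Lemma seqR_props F q k : valid q -> DR F q ->
  rx1 q <= rx1 (seqR F q k) /\ rx2 (seqR F q k) <= rx2 q /\
  ry1 q <= ry1 (seqR F q k) /\ ry2 (seqR F q k) <= ry2 q /\
  rx2 (seqR F q k) - rx1 (seqR F q k) = (rx2 q - rx1 q) / 2 ^ k /\
  ry2 (seqR F q k) - ry1 (seqR F q k) = (ry2 q - ry1 q) / 2 ^ k /\
  valid (seqR F q k) /\ DR F (seqR F q k) /\
  Cmod (JR F q) <= 4 ^ k * Cmod (JR F (seqR F q k)).
Proof.
  intros hv HD. induction k as [|k IH].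
  - simpl. unfold valid in hv. repeat split; try lra; auto.
  - destruct IH as (a & b & c & d & e & f & v & D & Hk).
    simpl seqR. set (q' := seqR F q k) in *.
    destruct (quad_prop q' (fst (pick F q')) (snd (pick F q')) v) as (a' & b' & c' & d' & e' & f').
    pose proof (pick_spec F q' v D) as P.
    assert (0 < 2 ^ k) by (apply pow_lt; lra).
    repeat split; try lra.
    + rewrite e', e. simpl. field. lra.
    + rewrite f', f. simpl. field. lra.
    + apply quad_DR; auto.
    + simpl. eapply Rle_trans; [exact Hk|].
      set (X := Cmod (JR F (quad q' (fst (pick F q')) (snd (pick F q'))))) in *.
      assert (0 <= 4 ^ k) by (apply pow_le; lra). nra.
Qed.

Lemma seqR_mono F q j k : valid q -> DR F q -> (j <= k)%nat ->
  rx1 (seqR F q j) <= rx1 (seqR F q k) /\ rx2 (seqR F q k) <= rx2 (seqR F q j) /\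
  ry1 (seqR F q j) <= ry1 (seqR F q k) /\ ry2 (seqR F q k) <= ry2 (seqR F q j).
Proof.
  intros hv HD H. induction H.
  - repeat split; lra.
  - destruct IHle as (a & b & c & d).
    destruct (seqR_props F q m hv HD) as (_ & _ & _ & _ & _ & _ & v & _).
    simpl seqR. destruct (quad_prop (seqR F q m) (fst (pick F (seqR F q m))) (snd (pick F (seqR F q m))) v) as (a' & b' & c' & d' & _).
    repeat split; lra.
Qed.

Lemma limit_pt F q : valid q -> DR F q -> exists px py, forall k,
  rx1 (seqR F q k) <= px <= rx2 (seqR F q k) /\ ry1 (seqR F q k) <= py <= ry2 (seqR F q k).
Proof.
  intros hv HD.
  assert (UBx : forall j k, rx1 (seqR F q j) <= rx2 (seqR F q k)).
  { intros j k. destruct (Nat.le_ge_cases j k) as [h|h].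
    - destruct (seqR_mono F q j k hv HD h) as (a & _). destruct (seqR_props F q k hv HD) as (_&_&_&_&_&_&[v1 v2]&_). lra.
    - destruct (seqR_mono F q k j hv HD h) as (_ & b & _). destruct (seqR_props F q j hv HD) as (_&_&_&_&_&_&[v1 v2]&_). lra. }
  assert (UBy : forall j k, ry1 (seqR F q j) <= ry2 (seqR F q k)).
  { intros j k. destruct (Nat.le_ge_cases j k) as [h|h].
    - destruct (seqR_mono F q j k hv HD h) as (_ & _ & a & _). destruct (seqR_props F q k hv HD) as (_&_&_&_&_&_&[v1 v2]&_). lra.
    - destruct (seqR_mono F q k j hv HD h) as (_ & _ & _ & b). destruct (seqR_props F q j hv HD) as (_&_&_&_&_&_&[v1 v2]&_). lra. }
  destruct (completeness (fun r => exists k, r = rx1 (seqR F q k))) as [px [Hub Hl]].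
  { exists (rx2 q). intros r [k ->]. apply (UBx k 0%nat). }
  { exists (rx1 q). exists 0%nat. reflexivity. }
  destruct (completeness (fun r => exists k, r = ry1 (seqR F q k))) as [py [Hub' Hl']].
  { exists (ry2 q). intros r [k ->]. apply (UBy k 0%nat). }
  { exists (ry1 q). exists 0%nat. reflexivity. }
  exists px, py. intros k. split; split.
  - apply Hub. exists k; auto.
  - apply Hl. intros r [j ->]. apply UBx.
  - apply Hub'. exists k; auto.
  - apply Hl'. intros r [j ->]. apply UBy.
Qed.

Lemma INR_lt_pow2 n : INR n < 2 ^ n.
Proof. induction n. simpl; lra. rewrite S_INR. simpl.
  assert (1 <= 2 ^ n) by (apply pow_R1_Rle; lra). lra. Qed.

Lemma small_pow2 A d : 0 <= A -> 0 < d -> exists k, A / 2 ^ k < d.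
Proof.
  intros hA hd. destruct (INR_unbounded (A / d)) as [n Hn]. exists n.
  pose proof (INR_lt_pow2 n). assert (0 < 2 ^ n) by (apply pow_lt; lra).
  assert (A / d < 2 ^ n) by lra.
  assert (A < 2 ^ n * d). { replace A with (A / d * d) by (field; lra). apply Rmult_lt_compat_r; lra. }
  apply Rmult_lt_reg_r with (2 ^ n); [lra|]. replace (A / 2 ^ n * 2 ^ n) with A by (field; lra). lra.
Qed.

Lemma Cmod_pair_sub (x y px py : R) : Cmod ((x, y) - (px, py))%C <= Rabs (x - px) + Rabs (y - py).
Proof. eapply Rle_trans. apply Cmod_le_sum. simpl. unfold Rminus. lra. Qed.

Lemma DiffRect_minus_affine F al be a b c d : DiffRect F a b c d ->
  DiffRect (fun z => F z - (al + be * z))%C a b c d.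
Proof. intros H x y hx hy. destruct (H x y hx hy) as [l Hl]. eexists. apply CD_minus. exact Hl.
  apply CD_plus. apply CD_const. apply CD_mult. apply CD_const. apply CD_id. Qed.

Lemma goursat F q : valid q -> DR F q -> JR F q = RtoC 0.
Proof.
  intros hv HD. destruct (limit_pt F q hv HD) as [px [py Hp]].
  destruct (Hp 0%nat) as [[p1 p2] [p3 p4]]. simpl in p1, p2, p3, p4.
  destruct (HD px py (conj p1 p2) (conj p3 p4)) as [l Hl].
  set (w := rx2 q - rx1 q). set (h := ry2 q - ry1 q).
  destruct hv as [hv1 hv2].
  assert (Hall : forall eps, 0 < eps -> Cmod (JR F q) <= 2 * eps * ((w + h) * (w + h))).
  { intros eps Heps.
    destruct (deriv_eps F (px, py) l Hl eps Heps) as [del [Hdel Hd]].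
    destruct (small_pow2 (w + h) del) as [k Hk]; [unfold w, h; lra|auto|].
    destruct (seqR_props F q k (conj hv1 hv2) HD) as (a & b & c & d & e & f & [v1 v2] & D & Hq).
    set (qk := seqR F q k) in *.
    set (al := (F (px, py) - l * (px, py))%C).
    assert (Eq : JR F qk = J (fun z => F z - (al + l * z))%C (rx1 qk) (rx2 qk) (ry1 qk) (ry2 qk)).
    { unfold JR. rewrite J_minus; auto. rewrite J_affine; auto. ring.
      apply DiffRect_Bd; auto. apply DiffRect_Bd; auto. apply DiffRect_affine. }
    assert (0 < 2 ^ k) by (apply pow_lt; lra).
    set (sk := (w + h) / 2 ^ k).
    assert (Hsk : rx2 qk - rx1 qk + (ry2 qk - ry1 qk) = sk) by (unfold sk; rewrite e, f; unfold w, h; field; lra).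
    destruct (Hp k) as [[k1 k2] [k3 k4]]. fold qk in k1, k2, k3, k4.
    assert (Bd : forall x y, rx1 qk <= x <= rx2 qk -> ry1 qk <= y <= ry2 qk ->
               Cmod (F (x, y) - (al + l * (x, y)))%C <= eps * sk).
    { intros x y hx hy.
      replace (F (x, y) - (al + l * (x, y)))%C with (F (x, y) - F (px, py) - l * ((x, y) - (px, py)))%C
        by (unfold al; ring).
      pose proof (Cmod_pair_sub x y px py).
      assert (Rabs (x - px) + Rabs (y - py) <= sk).
      { rewrite <- Hsk. unfold Rabs; destruct (Rcase_abs (x - px)); destruct (Rcase_abs (y - py)); lra. }
      assert (Cmod ((x, y) - (px, py))%C < del) by (unfold sk in *; lra).
      eapply Rle_trans. apply Hd; auto. apply Rmult_le_compat_l; lra. }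
    pose proof (J_bound (fun z => F z - (al + l * z))%C (rx1 qk) (rx2 qk) (ry1 qk) (ry2 qk) (eps * sk) v1 v2
      (DiffRect_Bd _ _ _ _ _ v1 v2 (DiffRect_minus_affine F al l _ _ _ _ D))
      (fun x hx => conj (Bd x (ry1 qk) hx (conj (Rle_refl _) v2)) (Bd x (ry2 qk) hx (conj v2 (Rle_refl _))))
      (fun y hy => conj (Bd (rx1 qk) y (conj (Rle_refl _) v1) hy) (Bd (rx2 qk) y (conj v1 (Rle_refl _)) hy))) as HB.
    rewrite <- Eq in HB. rewrite Hsk in HB.
    eapply Rle_trans. exact Hq.
    assert (E4 : 4 ^ k * (2 * sk * (eps * sk)) = 2 * eps * ((w + h) * (w + h))).
    { unfold sk. rewrite pow4. field. lra. }
    rewrite <- E4. apply Rmult_le_compat_l. apply pow_le; lra. exact HB. }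
  assert (Cmod (JR F q) = 0).
  { apply Rle_antisym; [|apply Cmod_ge_0].
    apply Rnot_lt_le. intro Hpos.
    set (S := (w + h) * (w + h)) in *. set (c := Cmod (JR F q)) in *.
    assert (HS : 0 <= S) by (apply Rmult_le_pos; unfold w, h; lra).
    assert (hden : 0 < 4 * S + 1) by lra.
    set (eps := c / (4 * S + 1)).
    assert (Heps : 0 < eps) by (unfold eps; apply Rdiv_lt_0_compat; lra).
    specialize (Hall eps Heps).
    assert (E : 2 * eps * S = c * (2 * S / (4 * S + 1))) by (unfold eps; field; lra).
    assert (Hr : 2 * S / (4 * S + 1) < 1).
    { apply (Rmult_lt_reg_r (4 * S + 1)); [lra|]. unfold Rdiv. rewrite Rmult_assoc, Rinv_l by lra. lra. }
    assert (c * (2 * S / (4 * S + 1)) < c * 1) by (apply Rmult_lt_compat_l; lra).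
    lra. }
  apply Cmod_eq_0. auto.
Qed.

Definition Gq (F : C -> C) (z0 : C) : C -> C :=
  fun z => ((F z - F z0) * / ((z - z0) * (z - z0)))%C.

Lemma pair_neq (x y a b : R) : x <> a -> (x, y) <> (a, b).
Proof. intros H E. inversion E. auto. Qed.
Lemma pair_neq2 (x y a b : R) : y <> b -> (x, y) <> (a, b).
Proof. intros H E. inversion E. auto. Qed.

Lemma Cminus_neq0 (z z0 : C) : z <> z0 -> (z - z0)%C <> RtoC 0.
Proof. intros H E. apply H. replace z with ((z - z0) + z0)%C by ring. rewrite E. ring. Qed.

Lemma Gq_deriv F z0 z : z <> z0 -> ex_derive F z -> ex_derive (Gq F z0) z.
Proof.
  intros Hz [l Hl]. eexists. unfold Gq. apply CD_mult.
  apply CD_minus. exact Hl. apply CD_const.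
  apply CD_inv. apply CD_mult; (apply CD_minus; [apply CD_id|apply CD_const]).
  apply Cmult_neq_0; apply Cminus_neq0; auto.
Qed.

Definition SqHyp (F : C -> C) (c1 c2 s : R) : Prop :=
  forall x y, Rabs (x - c1) <= s -> Rabs (y - c2) <= s -> ex_derive F (x, y).

Lemma Rabs_le_iff a b : -b <= a <= b -> Rabs a <= b.
Proof. intros. unfold Rabs; destruct (Rcase_abs a); lra. Qed.

Lemma Gq_DiffBd F c1 c2 s a b c d : SqHyp F c1 c2 s ->
  c1 - s <= a -> a <= b -> b <= c1 + s -> c2 - s <= c -> c <= d -> d <= c2 + s ->
  a <> c1 -> b <> c1 -> c <> c2 -> d <> c2 ->
  DiffBd (Gq F (c1, c2)) a b c d.
Proof.
  intros HS h1 h2 h3 h4 h5 h6 n1 n2 n3 n4. split; intros t Ht; split; apply Gq_deriv;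
  try (apply HS; apply Rabs_le_iff; lra);
  first [apply pair_neq2; assumption | apply pair_neq; assumption].
Qed.

Lemma Gq_DiffRect F c1 c2 s a b c d : SqHyp F c1 c2 s ->
  c1 - s <= a -> a <= b -> b <= c1 + s -> c2 - s <= c -> c <= d -> d <= c2 + s ->
  (c1 < a \/ b < c1 \/ c2 < c \/ d < c2) ->
  DiffRect (Gq F (c1, c2)) a b c d.
Proof.
  intros HS h1 h2 h3 h4 h5 h6 Hout x y hx hy. apply Gq_deriv.
  - destruct Hout as [o|[o|[o|o]]]; [apply pair_neq| apply pair_neq| apply pair_neq2| apply pair_neq2]; lra.
  - apply HS; apply Rabs_le_iff; lra.
Qed.

Lemma J_trisect F c1 c2 s t : SqHyp F c1 c2 s -> 0 < t -> t <= s ->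
  J (Gq F (c1, c2)) (c1 - t) (c1 + t) (c2 - t) (c2 + t) =
  J (Gq F (c1, c2)) (c1 - t / 3) (c1 + t / 3) (c2 - t / 3) (c2 + t / 3).
Proof.
  intros HS ht hts. set (G := Gq F (c1, c2)).
  set (a0 := c1 - t); set (a1 := c1 - t / 3); set (a2 := c1 + t / 3); set (a3 := c1 + t).
  set (b0 := c2 - t); set (b1 := c2 - t / 3); set (b2 := c2 + t / 3); set (b3 := c2 + t).
  assert (o1 : a0 < a1) by (unfold a0, a1; lra). assert (o2 : a1 < a2) by (unfold a1, a2; lra).
  assert (o3 : a2 < a3) by (unfold a2, a3; lra).
  assert (p1 : b0 < b1) by (unfold b0, b1; lra). assert (p2 : b1 < b2) by (unfold b1, b2; lra).
  assert (p3 : b2 < b3) by (unfold b2, b3; lra).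
  assert (ga0 : c1 - s <= a0) by (unfold a0; lra). assert (ga3 : a3 <= c1 + s) by (unfold a3; lra).
  assert (gb0 : c2 - s <= b0) by (unfold b0; lra). assert (gb3 : b3 <= c2 + s) by (unfold b3; lra).
  assert (na0 : a0 <> c1) by (unfold a0; lra). assert (na1 : a1 <> c1) by (unfold a1; lra).
  assert (na2 : a2 <> c1) by (unfold a2; lra). assert (na3 : a3 <> c1) by (unfold a3; lra).
  assert (nb0 : b0 <> c2) by (unfold b0; lra). assert (nb1 : b1 <> c2) by (unfold b1; lra).
  assert (nb2 : b2 <> c2) by (unfold b2; lra). assert (nb3 : b3 <> c2) by (unfold b3; lra).
  Ltac dbd HS := apply (Gq_DiffBd _ _ _ _ _ _ _ _ HS); lra || assumption.
  rewrite (J_split_x G a0 a1 a3 b0 b3) by (lra || dbd HS).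
  rewrite (J_split_x G a1 a2 a3 b0 b3) by (lra || dbd HS).
  rewrite (J_split_y G a0 a1 b0 b1 b3) by (lra || dbd HS).
  rewrite (J_split_y G a0 a1 b1 b2 b3) by (lra || dbd HS).
  rewrite (J_split_y G a1 a2 b0 b1 b3) by (lra || dbd HS).
  rewrite (J_split_y G a1 a2 b1 b2 b3) by (lra || dbd HS).
  rewrite (J_split_y G a2 a3 b0 b1 b3) by (lra || dbd HS).
  rewrite (J_split_y G a2 a3 b1 b2 b3) by (lra || dbd HS).
  Ltac gz HS := apply (goursat _ (mkR _ _ _ _)); [unfold valid; simpl; lra|
     unfold DR; simpl; apply (Gq_DiffRect _ _ _ _ _ _ _ _ HS); lra].
  assert (Z1 : J G a0 a1 b0 b1 = RtoC 0) by gz HS.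
  assert (Z2 : J G a0 a1 b1 b2 = RtoC 0) by gz HS.
  assert (Z3 : J G a0 a1 b2 b3 = RtoC 0) by gz HS.
  assert (Z4 : J G a1 a2 b0 b1 = RtoC 0) by gz HS.
  assert (Z6 : J G a1 a2 b2 b3 = RtoC 0) by gz HS.
  assert (Z7 : J G a2 a3 b0 b1 = RtoC 0) by gz HS.
  assert (Z8 : J G a2 a3 b1 b2 = RtoC 0) by gz HS.
  assert (Z9 : J G a2 a3 b2 b3 = RtoC 0) by gz HS.
  rewrite Z1, Z2, Z3, Z4, Z6, Z7, Z8, Z9. ring.
Qed.

Definition OnBd (c1 c2 t x y : R) : Prop :=
  Rabs (x - c1) <= t /\ Rabs (y - c2) <= t /\ (Rabs (x - c1) = t \/ Rabs (y - c2) = t).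

Lemma Rabs_m (c t : R) : 0 <= t -> Rabs (c - t - c) = t.
Proof. intros. replace (c - t - c) with (- t) by ring. rewrite Rabs_Ropp. apply Rabs_pos_eq; auto. Qed.
Lemma Rabs_p (c t : R) : 0 <= t -> Rabs (c + t - c) = t.
Proof. intros. replace (c + t - c) with t by ring. apply Rabs_pos_eq; auto. Qed.
Lemma Rabs_in (u c t : R) : c - t <= u <= c + t -> Rabs (u - c) <= t.
Proof. intros. apply Rabs_le_iff. lra. Qed.

Lemma OnBd_cases c1 c2 t : 0 <= t ->
  (forall u, c1 - t <= u <= c1 + t -> OnBd c1 c2 t u (c2 - t) /\ OnBd c1 c2 t u (c2 + t)) /\
  (forall u, c2 - t <= u <= c2 + t -> OnBd c1 c2 t (c1 - t) u /\ OnBd c1 c2 t (c1 + t) u).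
Proof.
  intros ht. split; intros u Hu; unfold OnBd;
  repeat split; try (apply Rabs_in; lra); try (rewrite Rabs_m by lra; lra); try (rewrite Rabs_p by lra; lra);
  try (right; first [apply Rabs_m | apply Rabs_p]; lra); try (left; first [apply Rabs_m | apply Rabs_p]; lra).
Qed.

Lemma DiffBd_sq (P : C -> C) c1 c2 t : 0 <= t -> (forall x y, OnBd c1 c2 t x y -> ex_derive P (x, y)) ->
  DiffBd P (c1 - t) (c1 + t) (c2 - t) (c2 + t).
Proof. intros ht H. destruct (OnBd_cases c1 c2 t ht) as [A B].
  split; intros u Hu; split; apply H; first [apply (A u Hu) | apply (B u Hu)]. Qed.

Lemma J_bound_sq (P : C -> C) c1 c2 t M : 0 <= t -> (forall x y, OnBd c1 c2 t x y -> ex_derive P (x, y)) ->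
  (forall x y, OnBd c1 c2 t x y -> Cmod (P (x, y)) <= M) ->
  Cmod (J P (c1 - t) (c1 + t) (c2 - t) (c2 + t)) <= 8 * t * M.
Proof. intros ht HD HM. destruct (OnBd_cases c1 c2 t ht) as [A B].
  replace (8 * t * M) with (2 * ((c1 + t - (c1 - t)) + (c2 + t - (c2 - t))) * M) by ring.
  apply J_bound; try lra. apply DiffBd_sq; auto.
  intros u Hu; split; apply HM; apply (A u Hu).
  intros u Hu; split; apply HM; apply (B u Hu). Qed.

Lemma J_ext_sq (P Q : C -> C) c1 c2 t : 0 <= t -> (forall x y, OnBd c1 c2 t x y -> P (x, y) = Q (x, y)) ->
  J P (c1 - t) (c1 + t) (c2 - t) (c2 + t) = J Q (c1 - t) (c1 + t) (c2 - t) (c2 + t).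
Proof. intros ht H. destruct (OnBd_cases c1 c2 t ht) as [A B]. unfold J, Hs, Vs.
  rewrite (RInt_ext (V := CRI) (fun x => P (x, c2 - t)) (fun x => Q (x, c2 - t))).
  rewrite (RInt_ext (V := CRI) (fun x => P (x, c2 + t)) (fun x => Q (x, c2 + t))).
  rewrite (RInt_ext (V := CRI) (fun y => P (c1 - t, y)) (fun y => Q (c1 - t, y))).
  rewrite (RInt_ext (V := CRI) (fun y => P (c1 + t, y)) (fun y => Q (c1 + t, y))).
  reflexivity.
  all: intros u Hu; rewrite Rmin_left in Hu by lra; rewrite Rmax_right in Hu by lra; apply H;
       first [apply (A u ltac:(lra)) | apply (B u ltac:(lra))].
Qed.

Lemma OnBd_Cmod c1 c2 t x y : 0 < t -> OnBd c1 c2 t x y ->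
  t <= Cmod ((x, y) - (c1, c2))%C /\ Cmod ((x, y) - (c1, c2))%C <= 2 * t.
Proof.
  intros ht [h1 [h2 h3]]. split.
  - destruct h3 as [e|e].
    + rewrite <- e. pose proof (fst_le_Cmod ((x, y) - (c1, c2))%C). simpl in H. unfold Rminus. lra.
    + rewrite <- e. pose proof (snd_le_Cmod ((x, y) - (c1, c2))%C). simpl in H. unfold Rminus. lra.
  - pose proof (Cmod_pair_sub x y c1 c2). lra.
Qed.

Lemma OnBd_neq c1 c2 t x y : 0 < t -> OnBd c1 c2 t x y -> (x, y) <> (c1, c2).
Proof. intros ht Hb E. destruct (OnBd_Cmod c1 c2 t x y ht Hb) as [A _]. rewrite E in A.
  replace ((c1, c2) - (c1, c2))%C with (RtoC 0) in A by (apply injective_projections; simpl; lra).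
  rewrite Cmod_0 in A. lra. Qed.

Lemma Cmod_div_sq (a w : C) (t : R) : 0 < t -> t <= Cmod w ->
  Cmod (a * / (w * w))%C <= Cmod a / (t * t).
Proof.
  intros ht hw. assert (w <> RtoC 0). { intro E; rewrite E, Cmod_0 in hw; lra. }
  rewrite Cmod_mult, Cmod_inv by (apply Cmult_neq_0; auto). rewrite Cmod_mult.
  unfold Rdiv. apply Rmult_le_compat_l. apply Cmod_ge_0.
  apply Rinv_le_contravar. nra. apply Rmult_le_compat; lra.
Qed.

Lemma RInt_lb (g : R -> R) a b m : a <= b -> ex_RInt g a b -> (forall x, a <= x <= b -> m <= g x) ->
  (b - a) * m <= RInt g a b.
Proof. intros hab Hg H. replace ((b - a) * m) with (RInt (fun _ => m) a b).
  apply RInt_le; auto. apply ex_RInt_const. intros; apply H; lra.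
  rewrite RInt_const. reflexivity. Qed.
Lemma RInt_ub (g : R -> R) a b m : a <= b -> ex_RInt g a b -> (forall x, a <= x <= b -> g x <= m) ->
  RInt g a b <= (b - a) * m.
Proof. intros hab Hg H. replace ((b - a) * m) with (RInt (fun _ => m) a b).
  apply RInt_le; auto. apply ex_RInt_const. intros; apply H; lra.
  rewrite RInt_const. reflexivity. Qed.

Lemma ex_RInt_snd (f : R -> C) a b : @ex_RInt CRI f a b -> ex_RInt (fun x => snd (f x)) a b.
Proof. intros [I HI]. exists (snd I). apply (is_RInt_fct_extend_snd f a b I HI). Qed.
Lemma ex_RInt_fst (f : R -> C) a b : @ex_RInt CRI f a b -> ex_RInt (fun x => fst (f x)) a b.
Proof. intros [I HI]. exists (fst I). apply (is_RInt_fct_extend_fst f a b I HI). Qed.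

Lemma frac_lb a t : 0 < t -> Rabs a <= t -> 1 / (2 * t) <= t / (a ^ 2 + t ^ 2).
Proof.
  intros ht ha. assert (a * a <= t * t).
  { unfold Rabs in ha; destruct (Rcase_abs a); nra. }
  assert (0 < a ^ 2 + t ^ 2) by nra.
  unfold Rdiv. rewrite Rmult_1_l.
  apply Rle_trans with (t * / (t * t + t * t)).
  - right. field. lra.
  - apply Rmult_le_compat_l. lra. apply Rinv_le_contravar. lra. simpl. nra.
Qed.

Definition Uq (z0 : C) : C -> C := fun z => (/ (z - z0))%C.

Lemma Uq_deriv z0 z : z <> z0 -> ex_derive (Uq z0) z.
Proof. intros H. eexists. unfold Uq. apply CD_inv. apply CD_minus. apply CD_id. apply CD_const.
  apply Cminus_neq0; auto. Qed.

Lemma snd_Jform (a b c d : C) : snd (a - b + Ci * (c - d))%C = snd a - snd b + (fst c - fst d).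
Proof. destruct a, b, c, d. simpl. ring. Qed.

Lemma snd_Uq c1 c2 x y : snd (Uq (c1, c2) (x, y)) = - (y - c2) / ((x - c1) ^ 2 + (y - c2) ^ 2).
Proof. reflexivity. Qed.
Lemma fst_Uq c1 c2 x y : fst (Uq (c1, c2) (x, y)) = (x - c1) / ((x - c1) ^ 2 + (y - c2) ^ 2).
Proof. reflexivity. Qed.
Lemma J_U_lower c1 c2 t : 0 < t -> 4 <= Cmod (J (Uq (c1, c2)) (c1 - t) (c1 + t) (c2 - t) (c2 + t)).
Proof.
  intros ht.
  assert (DB : DiffBd (Uq (c1, c2)) (c1 - t) (c1 + t) (c2 - t) (c2 + t)).
  { apply DiffBd_sq. lra. intros x y Hb. apply Uq_deriv. apply (OnBd_neq c1 c2 t); auto. }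
  assert (h1 : c1 - t <= c1 + t) by lra. assert (h2 : c2 - t <= c2 + t) by lra.
  destruct (exH_bd _ _ _ _ _ h1 DB) as [F1 F2].
  destruct (exV_bd _ _ _ _ _ h2 DB) as [F3 F4].
  eapply Rle_trans; [|apply snd_le_Cmod]. eapply Rle_trans; [|apply Rle_abs].
  unfold J, Hs, Vs. rewrite snd_Jform.
  rewrite !RInt_snd by auto. rewrite !RInt_fst by auto.
  pose proof (RInt_lb _ _ _ (1 / (2 * t)) h1 (ex_RInt_snd _ _ _ F1)) as L1.
  pose proof (RInt_ub _ _ _ (- (1 / (2 * t))) h1 (ex_RInt_snd _ _ _ F2)) as L2.
  pose proof (RInt_lb _ _ _ (1 / (2 * t)) h2 (ex_RInt_fst _ _ _ F4)) as L3.
  pose proof (RInt_ub _ _ _ (- (1 / (2 * t))) h2 (ex_RInt_fst _ _ _ F3)) as L4.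
  assert (E : (c1 + t - (c1 - t)) * (1 / (2 * t)) = 1) by (field; lra).
  assert (E' : (c2 + t - (c2 - t)) * (1 / (2 * t)) = 1) by (field; lra).
  assert (Ha : forall x, c1 - t <= x <= c1 + t -> 1 / (2 * t) <= snd (Uq (c1, c2) (x, c2 - t))).
  { intros x Hx. rewrite snd_Uq.
    replace (- (c2 - t - c2)) with t by ring. replace ((c2 - t - c2) ^ 2) with (t ^ 2) by ring.
    apply frac_lb; auto. apply Rabs_in. lra. }
  assert (Hb : forall x, c1 - t <= x <= c1 + t -> snd (Uq (c1, c2) (x, c2 + t)) <= - (1 / (2 * t))).
  { intros x Hx. rewrite snd_Uq.
    replace (- (c2 + t - c2)) with (- t) by ring. replace ((c2 + t - c2) ^ 2) with (t ^ 2) by ring.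
    pose proof (frac_lb (x - c1) t ht (Rabs_in x c1 t ltac:(lra))). unfold Rdiv in *. lra. }
  assert (Hc : forall y, c2 - t <= y <= c2 + t -> 1 / (2 * t) <= fst (Uq (c1, c2) (c1 + t, y))).
  { intros y Hy. rewrite fst_Uq.
    replace (c1 + t - c1) with t by ring. rewrite Rplus_comm.
    apply frac_lb; auto. apply Rabs_in. lra. }
  assert (Hd : forall y, c2 - t <= y <= c2 + t -> fst (Uq (c1, c2) (c1 - t, y)) <= - (1 / (2 * t))).
  { intros y Hy. rewrite fst_Uq.
    replace (c1 - t - c1) with (- t) by ring. replace ((- t) ^ 2) with (t ^ 2) by ring. rewrite Rplus_comm.
    pose proof (frac_lb (y - c2) t ht (Rabs_in y c2 t ltac:(lra))). unfold Rdiv in *. lra. }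
  specialize (L1 Ha). specialize (L2 Hb). specialize (L3 Hc). specialize (L4 Hd).
  rewrite E in L1. rewrite E' in L3.
  replace ((c1 + t - (c1 - t)) * - (1 / (2 * t))) with (-1) in L2 by (field; lra).
  replace ((c2 + t - (c2 - t)) * - (1 / (2 * t))) with (-1) in L4 by (field; lra).
  lra.
Qed.

Lemma J_iter F c1 c2 s k : SqHyp F c1 c2 s -> 0 < s ->
  J (Gq F (c1, c2)) (c1 - s) (c1 + s) (c2 - s) (c2 + s) =
  J (Gq F (c1, c2)) (c1 - s / 3 ^ k) (c1 + s / 3 ^ k) (c2 - s / 3 ^ k) (c2 + s / 3 ^ k).
Proof.
  intros HS hs. induction k.
  - simpl. replace (s / 1) with s by field. reflexivity.
  - rewrite IHk. assert (0 < 3 ^ k) by (apply pow_lt; lra).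
    assert (1 <= 3 ^ k) by (apply pow_R1_Rle; lra).
    rewrite (J_trisect F c1 c2 s (s / 3 ^ k) HS).
    + replace (s / 3 ^ S k) with (s / 3 ^ k / 3) by (simpl; field; lra). reflexivity.
    + apply Rdiv_lt_0_compat; lra.
    + apply Rmult_le_reg_r with (3 ^ k); auto. unfold Rdiv. rewrite Rmult_assoc, Rinv_l by lra. nra.
Qed.

Lemma small_pow3 A d : 0 <= A -> 0 < d -> exists k, A / 3 ^ k < d.
Proof.
  intros hA hd. destruct (small_pow2 A d hA hd) as [k Hk]. exists k.
  assert (0 < 2 ^ k) by (apply pow_lt; lra).
  assert (2 ^ k <= 3 ^ k) by (apply pow_incr; lra).
  eapply Rle_lt_trans; [|exact Hk]. unfold Rdiv. apply Rmult_le_compat_l; auto.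
  apply Rinv_le_contravar; auto.
Qed.

Lemma OnBd_in c1 c2 t s x y : t <= s -> OnBd c1 c2 t x y -> Rabs (x - c1) <= s /\ Rabs (y - c2) <= s.
Proof. intros h [a [b _]]. split; lra. Qed.

Lemma cauchy_est F c1 c2 s M l : 0 < s -> SqHyp F c1 c2 s ->
  (forall x y, Rabs (x - c1) <= s -> Rabs (y - c2) <= s -> Cmod (F (x, y) - F (c1, c2)) <= M) ->
  is_derive F (c1, c2) l -> Cmod l <= 2 * M / s.
Proof.
  intros hs HS HM Hl.
  assert (M0 : 0 <= M).
  { specialize (HM c1 c2). replace (c1 - c1) with 0 in HM by ring. replace (c2 - c2) with 0 in HM by ring.
    rewrite Rabs_R0 in HM. eapply Rle_trans; [apply Cmod_ge_0|]. apply HM; lra. }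
  assert (HJs : Cmod (J (Gq F (c1, c2)) (c1 - s) (c1 + s) (c2 - s) (c2 + s)) <= 8 * s * (M / (s * s))).
  { apply J_bound_sq. lra.
    - intros x y Hb. apply Gq_deriv. apply (OnBd_neq c1 c2 s); auto.
      destruct (OnBd_in c1 c2 s s x y (Rle_refl _) Hb). apply HS; auto.
    - intros x y Hb. unfold Gq. eapply Rle_trans. apply Cmod_div_sq with (t := s); auto.
      apply (OnBd_Cmod c1 c2 s x y hs Hb).
      destruct (OnBd_in c1 c2 s s x y (Rle_refl _) Hb).
      unfold Rdiv. apply Rmult_le_compat_r. left; apply Rinv_0_lt_compat; nra. apply HM; auto. }
  replace (8 * s * (M / (s * s))) with (8 * M / s) in HJs by (field; lra).
  assert (Key : forall eps, 0 < eps -> Cmod l <= 2 * M / s + 4 * eps).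
  { intros eps Heps.
    destruct (deriv_eps F (c1, c2) l Hl eps Heps) as [del [Hdel Hd]].
    destruct (small_pow3 (2 * s) del) as [k Hk]; [lra|auto|].
    assert (h3 : 0 < 3 ^ k) by (apply pow_lt; lra).
    assert (h3' : 1 <= 3 ^ k) by (apply pow_R1_Rle; lra).
    set (t := s / 3 ^ k) in *.
    assert (ht : 0 < t) by (unfold t; apply Rdiv_lt_0_compat; lra).
    assert (hts : t <= s).
    { unfold t. apply Rmult_le_reg_r with (3 ^ k); auto. unfold Rdiv. rewrite Rmult_assoc, Rinv_l by lra. nra. }
    assert (h2t : 2 * t < del) by (unfold t; unfold Rdiv in *; lra).
    rewrite (J_iter F c1 c2 s k HS hs) in HJs. fold t in HJs.
    set (E' := fun z => ((F z - F (c1, c2) - l * (z - (c1, c2))) * / ((z - (c1, c2)) * (z - (c1, c2))))%C).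
    assert (Dz : forall x y, OnBd c1 c2 t x y -> ex_derive F (x, y) /\ (x, y) <> (c1, c2)).
    { intros x y Hb. split. destruct (OnBd_in c1 c2 t s x y hts Hb). apply HS; auto.
      apply (OnBd_neq c1 c2 t); auto. }
    assert (DU : forall x y, OnBd c1 c2 t x y -> ex_derive (Uq (c1, c2)) (x, y)).
    { intros x y Hb. apply Uq_deriv. apply (Dz x y Hb). }
    assert (DlU : forall x y, OnBd c1 c2 t x y -> ex_derive (fun z => l * Uq (c1, c2) z)%C (x, y)).
    { intros x y Hb. destruct (DU x y Hb) as [u Hu]. eexists. apply CD_mult. apply CD_const. exact Hu. }
    assert (DE : forall x y, OnBd c1 c2 t x y -> ex_derive E' (x, y)).
    { intros x y Hb. destruct (Dz x y Hb) as [[f Hf] Hn]. eexists. unfold E'. apply CD_mult.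
      apply CD_minus. apply CD_minus. exact Hf. apply CD_const. apply CD_mult. apply CD_const.
      apply CD_minus. apply CD_id. apply CD_const.
      apply CD_inv. apply CD_mult; (apply CD_minus; [apply CD_id|apply CD_const]).
      apply Cmult_neq_0; apply Cminus_neq0; auto. }
    assert (Split : J (Gq F (c1, c2)) (c1 - t) (c1 + t) (c2 - t) (c2 + t) =
       (l * J (Uq (c1, c2)) (c1 - t) (c1 + t) (c2 - t) (c2 + t) + J E' (c1 - t) (c1 + t) (c2 - t) (c2 + t))%C).
    { rewrite (J_ext_sq (Gq F (c1, c2)) (fun z => l * Uq (c1, c2) z + E' z)%C c1 c2 t) by
        (lra || (intros x y Hb; destruct (Dz x y Hb) as [_ Hn]; unfold Gq, Uq, E';
                 field; try split; apply Cminus_neq0; auto)).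
      rewrite J_plus by (lra || (apply DiffBd_sq; [lra|]; auto)).
      rewrite J_cmult by (lra || (apply DiffBd_sq; [lra|]; auto)).
      reflexivity. }
    assert (HE : Cmod (J E' (c1 - t) (c1 + t) (c2 - t) (c2 + t)) <= 8 * t * (eps * (2 * t) / (t * t))).
    { apply J_bound_sq. lra. auto.
      intros x y Hb. unfold E'. destruct (OnBd_Cmod c1 c2 t x y ht Hb) as [B1 B2].
      eapply Rle_trans. apply Cmod_div_sq with (t := t); auto.
      unfold Rdiv. apply Rmult_le_compat_r. left; apply Rinv_0_lt_compat; nra.
      eapply Rle_trans. apply Hd. lra. apply Rmult_le_compat_l; lra. }
    replace (8 * t * (eps * (2 * t) / (t * t))) with (16 * eps) in HE by (field; lra).
    pose proof (J_U_lower c1 c2 t ht) as HU.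
    assert (Cmod (l * J (Uq (c1, c2)) (c1 - t) (c1 + t) (c2 - t) (c2 + t))%C <= 8 * M / s + 16 * eps).
    { replace (l * J (Uq (c1, c2)) (c1 - t) (c1 + t) (c2 - t) (c2 + t))%C with
        (J (Gq F (c1, c2)) (c1 - t) (c1 + t) (c2 - t) (c2 + t) - J E' (c1 - t) (c1 + t) (c2 - t) (c2 + t))%C
        by (rewrite Split; ring).
      eapply Rle_trans. unfold Cminus. apply Cmod_triangle. rewrite Cmod_opp. lra. }
    rewrite Cmod_mult in H. pose proof (Cmod_ge_0 l).
    assert (4 * Cmod l <= 8 * M / s + 16 * eps) by nra.
    assert (E2 : 2 * M / s = (8 * M / s) / 4) by (field; lra).
    rewrite E2. lra. }
  apply Rnot_lt_le. intro Hc.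
  set (eps := (Cmod l - 2 * M / s) / 8).
  assert (0 < eps) by (unfold eps; lra).
  specialize (Key eps H). unfold eps in Key. lra.
Qed.

Lemma is_derive_of_eps_R (f : R -> R) x l :
  (forall eps, 0 < eps -> exists del, 0 < del /\ forall y, Rabs (y - x) < del ->
    Rabs (f y - f x - l * (y - x)) <= eps * Rabs (y - x)) -> is_derive f x l.
Proof.
  intros H. split.
  - apply is_linear_scal_l.
  - intros x' Hx.
    apply (@is_filter_lim_locally_unique R_AbsRing (AbsRing_NormedModule R_AbsRing)) in Hx.
    subst x'.
    intros eps. destruct (H eps (cond_pos eps)) as [del [Hdel Hw]].
    exists (mkposreal del Hdel). intros y Hb.
    change (Rabs (f y - f x - (y - x) * l) <= eps * Rabs (y - x)).
    rewrite (Rmult_comm (y - x)). apply Hw. exact Hb.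
Qed.

Definition path (w z : C) (s : R) : C := (w + RtoC s * (z - w))%C.

Lemma path_diff w z s t : (path w z s - path w z t = RtoC (s - t) * (z - w))%C.
Proof. unfold path. rewrite RtoC_minus. ring. Qed.

Lemma Cmod_path_diff w z s t : Cmod (path w z s - path w z t)%C = Rabs (s - t) * Cmod (z - w).
Proof. rewrite path_diff, Cmod_mult, Cmod_R. reflexivity. Qed.

Lemma psi_deriv (phi : C -> C) (u w z : C) t l :
  is_derive phi (path w z t) l ->
  is_derive (fun s => fst (u * phi (path w z s))%C) t (fst (u * l * (z - w))%C).
Proof.
  intros Hl. apply is_derive_of_eps_R. intros eps Heps.
  set (K := ((Cmod u + 1) * (Cmod (z - w) + 1))).
  assert (HK : 0 < K) by (unfold K; pose proof (Cmod_ge_0 u); pose proof (Cmod_ge_0 (z - w)); nra).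
  destruct (deriv_eps phi (path w z t) l Hl (eps / K) ltac:(apply Rdiv_lt_0_compat; lra)) as [del [Hdel Hd]].
  exists (del / K). split. apply Rdiv_lt_0_compat; lra.
  intros s Hs.
  assert (Hq : Cmod (path w z s - path w z t)%C < del).
  { rewrite Cmod_path_diff. pose proof (Cmod_ge_0 (z - w)). pose proof (Rabs_pos (s - t)).
    assert (Cmod (z - w) <= K) by (unfold K; pose proof (Cmod_ge_0 u); nra).
    apply Rle_lt_trans with (Rabs (s - t) * K). apply Rmult_le_compat_l; lra.
    apply Rmult_lt_reg_r with (/ K). apply Rinv_0_lt_compat; auto.
    rewrite Rmult_assoc, Rinv_r, Rmult_1_r by lra. exact Hs. }
  specialize (Hd _ Hq).
  replace (fst (u * phi (path w z s))%C - fst (u * phi (path w z t))%C - fst (u * l * (z - w))%C * (s - t))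
    with (fst (u * (phi (path w z s) - phi (path w z t) - l * (path w z s - path w z t)))%C).
  2:{ rewrite path_diff. destruct u, l, z, w, (phi (path (r5, r6) (r3, r4) s)), (phi (path (r5, r6) (r3, r4) t)).
      simpl. ring. }
  eapply Rle_trans. apply fst_le_Cmod. rewrite Cmod_mult.
  rewrite Cmod_path_diff in Hd.
  pose proof (Cmod_ge_0 u). pose proof (Cmod_ge_0 (z - w)). pose proof (Rabs_pos (s - t)).
  apply Rle_trans with (Cmod u * (eps / K * (Rabs (s - t) * Cmod (z - w)))).
  apply Rmult_le_compat_l; auto.
  replace (Cmod u * (eps / K * (Rabs (s - t) * Cmod (z - w)))) with
    (eps * Rabs (s - t) * (Cmod u * Cmod (z - w) / K)) by (field; lra).
  rewrite <- (Rmult_1_r (eps * Rabs (s - t))) at 2.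
  apply Rmult_le_compat_l. nra.
  apply Rmult_le_reg_r with K. lra.
  unfold Rdiv. rewrite Rmult_assoc, Rinv_l by lra. unfold K. nra.
Qed.

Lemma conj_mult_fst (d : C) : fst (Cconj d * d)%C = Cmod d * Cmod d.
Proof. destruct d as [a b]. unfold Cconj, Cmod; simpl. rewrite sqrt_sqrt by nra. ring. Qed.

Lemma cmvt (phi : C -> C) w z K : 0 <= K ->
  (forall t, 0 <= t <= 1 -> exists l, is_derive phi (path w z t) l /\ Cmod l <= K) ->
  Cmod (phi z - phi w) <= K * Cmod (z - w).
Proof.
  intros HK H.
  set (d := (phi z - phi w)%C). set (u := Cconj d).
  set (psi := fun s => fst (u * phi (path w z s))%C).
  assert (Hd : forall s, 0 <= s <= 1 -> exists l, is_derive psi s (fst (u * l * (z - w))%C) /\ Cmod l <= K).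
  { intros s Hs. destruct (H s Hs) as [l [Hl Hk]]. exists l. split; auto. apply psi_deriv. auto. }
  destruct (MVT_gen psi 0 1 (fun s => Derive psi s)) as [c [Hc Eq]].
  - intros x Hx. rewrite Rmin_left, Rmax_right in Hx by lra.
    destruct (Hd x ltac:(lra)) as [l [Hl _]]. apply Derive_correct. eexists; eauto.
  - intros x Hx. rewrite Rmin_left, Rmax_right in Hx by lra.
    destruct (Hd x Hx) as [l [Hl _]]. apply continuity_pt_filterlim.
    apply (ex_derive_continuous (K := R_AbsRing) (V := R_NormedModule)). eexists; eauto.
  - rewrite Rmin_left, Rmax_right in Hc by lra.
    destruct (Hd c Hc) as [l [Hl Hk]]. rewrite (is_derive_unique psi c _ Hl) in Eq.
    assert (E1 : psi 1 - psi 0 = Cmod d * Cmod d).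
    { unfold psi. replace (path w z 1) with z by (unfold path; ring). replace (path w z 0) with w by (unfold path; ring).
      rewrite <- conj_mult_fst. unfold u, d. destruct (phi z), (phi w). simpl. ring. }
    rewrite E1 in Eq. rewrite Rminus_0_r, Rmult_1_r in Eq.
    assert (B : fst (u * l * (z - w))%C <= Cmod d * (K * Cmod (z - w))).
    { eapply Rle_trans. apply Rle_abs. eapply Rle_trans. apply fst_le_Cmod.
      rewrite !Cmod_mult. unfold u. rewrite Cmod_conj. pose proof (Cmod_ge_0 d). pose proof (Cmod_ge_0 (z - w)).
      pose proof (Cmod_ge_0 l).
      replace (Cmod d * Cmod l * Cmod (z - w)) with ((Cmod d * Cmod (z - w)) * Cmod l) by ring.
      replace (Cmod d * (K * Cmod (z - w))) with ((Cmod d * Cmod (z - w)) * K) by ring.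
      apply Rmult_le_compat_l; auto. apply Rmult_le_pos; auto. }
    pose proof (Cmod_ge_0 d). pose proof (Cmod_ge_0 (z - w)).
    destruct (Rle_lt_or_eq_dec 0 (Cmod d) H0) as [Hp|He].
    + fold d. apply Rmult_le_reg_l with (Cmod d); auto. lra.
    + fold d. rewrite <- He. apply Rmult_le_pos; auto.
Qed.

Lemma Ceqb_true u v : Ceqb u v = true <-> u = v.
Proof.
  unfold Ceqb. destruct u as [u1 u2], v as [v1 v2]; simpl.
  destruct (Req_EM_T u1 v1); destruct (Req_EM_T u2 v2); split; intros H; subst; auto; try discriminate;
  inversion H; contradiction.
Qed.
Lemma Ceqb_false u v : Ceqb u v = false <-> u <> v.
Proof. rewrite <- Ceqb_true. destruct (Ceqb u v); split; intros; try discriminate; auto. exfalso; auto. Qed.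

Definition stepP (n : nat) (a : C) (e : R) (p : C2) : C2 :=
  if Nat.odd n then (fst p, Cplus (snd p) (gfun e a (fst p))) else (Cplus (fst p) (gfun e a (snd p)), snd p).
Definition argP (n : nat) (p : C2) : C := if Nat.odd n then fst p else snd p.
Fixpoint Pt (a : nat -> C) (eps : nat -> R) (n : nat) (z : C) : C2 :=
  match n with
  | O => (z, RtoC 0)
  | S m => stepP (S m) (a (S m)) (eps (S m)) (Pt a eps m z)
  end.

Lemma fmap_eq n a e p : fmap n a e p = if Ceqb (argP n p) a then None else Some (stepP n a e p).
Proof. destruct p as [x y]. unfold fmap, argP, stepP. simpl. destruct (Nat.odd n); reflexivity. Qed.

Definition Good (a : nat -> C) (eps : nat -> R) (n : nat) (z : C) : Prop :=
  forall k, (1 <= k <= n)%nat -> argP k (Pt a eps (k - 1) z) <> a k.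

Lemma gamma_some a eps n z p : gamma a eps n z = Some p -> p = Pt a eps n z /\ Good a eps n z.
Proof.
  revert p. induction n as [|m IH]; intros p H.
  - simpl in H. inversion H. split; auto. intros k Hk. lia.
  - simpl in H. destruct (gamma a eps m z) as [p'|] eqn:E; [|discriminate].
    destruct (IH p' eq_refl) as [-> Hg].
    rewrite fmap_eq in H. destruct (Ceqb (argP (S m) (Pt a eps m z)) (a (S m))) eqn:Eb; [discriminate|].
    inversion H. split; auto.
    intros k Hk. destruct (Nat.eq_dec k (S m)) as [->|Hne].
    + simpl. rewrite Nat.sub_0_r. apply Ceqb_false. auto.
    + apply Hg. lia.
Qed.

Lemma gamma_good a eps n z : Good a eps n z -> gamma a eps n z = Some (Pt a eps n z).
Proof.
  induction n as [|m IH]; intros Hg.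
  - reflexivity.
  - simpl. rewrite IH. rewrite fmap_eq.
    assert (argP (S m) (Pt a eps m z) <> a (S m)).
    { specialize (Hg (S m) ltac:(lia)). simpl in Hg. rewrite Nat.sub_0_r in Hg. auto. }
    apply Ceqb_false in H. rewrite H. reflexivity.
    intros k Hk. apply Hg. lia.
Qed.

Definition acon (k : nat) : C := RtoC (4 * INR k - 2).
Definition Rcon (k : nat) : R := 4 * INR k.
Definition EpsHyp (eps : nat -> R) : Prop :=
  forall k, (1 <= k)%nat -> 0 < eps k /\ eps k <= 1 / (8 * 2 ^ k) /\ eps (S k) <= eps k.

Fixpoint Ssum (eps : nat -> R) (k : nat) : R :=
  match k with O => 0 | S j => Ssum eps j + eps (S j) end.

Lemma Ssum_bound eps k : EpsHyp eps -> Ssum eps k <= 1 / 8 - 1 / (8 * 2 ^ k).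
Proof.
  intros He. induction k.
  - simpl. lra.
  - simpl. destruct (He (S k) ltac:(lia)) as [h1 [h2 _]]. simpl in h2.
    assert (0 < 2 ^ k) by (apply pow_lt; lra).
    replace (1 / 8 - 1 / (8 * (2 * 2 ^ k))) with (1 / 8 - 1 / (8 * 2 ^ k) + 1 / (8 * (2 * 2 ^ k))) by (field; lra).
    lra.
Qed.
Lemma Ssum_le eps k : EpsHyp eps -> Ssum eps k <= 1 / 8.
Proof. intros He. pose proof (Ssum_bound eps k He). assert (0 < 2 ^ k) by (apply pow_lt; lra).
  assert (0 < 1 / (8 * 2 ^ k)) by (apply Rdiv_lt_0_compat; lra). lra. Qed.
Lemma Ssum_S eps k : Ssum eps (S k) = Ssum eps k + eps (S k).
Proof. reflexivity. Qed.
Lemma eps_pos eps k : EpsHyp eps -> (1 <= k)%nat -> 0 < eps k.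
Proof. intros He h. apply (He k h). Qed.
Lemma eps_le1 eps k : EpsHyp eps -> (1 <= k)%nat -> eps k <= 1 / 8.
Proof. intros He h. destruct (He k h) as [_ [h2 _]]. assert (1 <= 2 ^ k) by (apply pow_R1_Rle; lra).
  eapply Rle_trans; [exact h2|]. unfold Rdiv. rewrite !Rmult_1_l. apply Rinv_le_contravar; lra. Qed.
Lemma Ssum_mono eps j k : EpsHyp eps -> (j <= k)%nat -> Ssum eps j <= Ssum eps k.
Proof. intros He h. induction h. lra. simpl. pose proof (eps_pos eps (S m) He ltac:(lia)). lra. Qed.

Lemma Cmod_acon k : (1 <= k)%nat -> Cmod (acon k) = 4 * INR k - 2.
Proof. intros h. unfold acon. rewrite Cmod_R. apply Rabs_pos_eq. apply le_INR in h. simpl in h. lra. Qed.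

Lemma Cmod_acon_diff i k : Cmod (acon i - acon k) = 4 * Rabs (INR i - INR k).
Proof. unfold acon. rewrite <- RtoC_minus, Cmod_R.
  replace (4 * INR i - 2 - (4 * INR k - 2)) with (4 * (INR i - INR k)) by ring.
  rewrite Rabs_mult. rewrite (Rabs_pos_eq 4) by lra. reflexivity. Qed.

Lemma Cmod_gfun e a u : 0 < e -> u <> a -> Cmod (gfun e a u) = e / Cmod (u - a).
Proof. intros he hu. unfold gfun. rewrite Cmod_div. rewrite Cmod_R, Rabs_pos_eq by lra. reflexivity.
  apply Cminus_neq0; auto. Qed.

Lemma Cmod_gfun_le e a u r : 0 < e -> 0 < r -> r <= Cmod (u - a) -> Cmod (gfun e a u) <= e / r.
Proof. intros he hr hu. assert (u <> a). { intro E; subst. replace (a - a)%C with (RtoC 0) in hu by ring. rewrite Cmod_0 in hu. lra. }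
  rewrite Cmod_gfun by auto. unfold Rdiv. apply Rmult_le_compat_l. lra. apply Rinv_le_contravar; lra. Qed.

Lemma Cmod_rev_tri (u v : C) : Cmod u - Cmod v <= Cmod (u - v).
Proof. pose proof (Cmod_triangle (u - v) v). replace (u - v + v)%C with u in H by ring. lra. Qed.

Lemma Cmod_sub_tri (u v w : C) : Cmod (u - w) <= Cmod (u - v) + Cmod (v - w).
Proof. replace (u - w)%C with ((u - v) + (v - w))%C by ring. apply Cmod_triangle. Qed.

Notation XX eps k z := (fst (Pt acon eps k z)).
Notation YY eps k z := (snd (Pt acon eps k z)).

Lemma Pt_S eps j z : Pt acon eps (S j) z =
  if Nat.odd (S j) then (XX eps j z, YY eps j z + gfun (eps (S j)) (acon (S j)) (XX eps j z))%C
  else (XX eps j z + gfun (eps (S j)) (acon (S j)) (YY eps j z), YY eps j z)%C.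
Proof. reflexivity. Qed.

Lemma Ssum_nonneg eps k : EpsHyp eps -> 0 <= Ssum eps k.
Proof. intros He. apply (Ssum_mono eps 0 k He). lia. Qed.

Lemma Cmod_plus_ge (u v : C) : Cmod u - Cmod v <= Cmod (u + v).
Proof. pose proof (Cmod_rev_tri u (- v)). rewrite Cmod_opp in H. unfold Cminus in H.
  replace (u + - - v)%C with (u + v)%C in H by ring. lra. Qed.

Lemma trapY eps m j z : EpsHyp eps -> (j <= m)%nat -> 4 * INR m + 1 <= Cmod (YY eps j z) ->
  (forall k, (j < k <= m)%nat -> Nat.odd k = true -> 3 <= Cmod (XX eps j z - acon k)) ->
  4 * INR m < Cmod (YY eps m z).
Proof.
  intros He hjm hY hX.
  assert (Inv : forall i, (j + i <= m)%nat ->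
     Cmod (XX eps (j + i) z - XX eps j z) <= Ssum eps (j + i) - Ssum eps j /\
     Cmod (YY eps j z) - (Ssum eps (j + i) - Ssum eps j) <= Cmod (YY eps (j + i) z)).
  { induction i as [|i IH]; intros hi.
    - rewrite Nat.add_0_r. replace (XX eps j z - XX eps j z)%C with (RtoC 0) by ring. rewrite Cmod_0. lra.
    - destruct (IH ltac:(lia)) as [IX IY].
      replace (j + S i)%nat with (S (j + i)) by lia. set (l := (j + i)%nat) in *.
      pose proof (Ssum_le eps l He) as S1. pose proof (Ssum_nonneg eps j He) as S2.
      pose proof (eps_pos eps (S l) He ltac:(lia)) as ep.
      rewrite Ssum_S. rewrite Pt_S. destruct (Nat.odd (S l)) eqn:Eo; simpl fst; simpl snd.
      + assert (D : 2 <= Cmod (XX eps l z - acon (S l))).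
        { pose proof (hX (S l) ltac:(lia) Eo) as T1. pose proof (Cmod_sub_tri (XX eps j z) (XX eps l z) (acon (S l))) as T2.
          rewrite (Cmod_sub_sym (XX eps j z) (XX eps l z)) in T2. lra. }
        pose proof (Cmod_gfun_le (eps (S l)) (acon (S l)) (XX eps l z) 2 ep ltac:(lra) D) as G.
        pose proof (Cmod_plus_ge (YY eps l z) (gfun (eps (S l)) (acon (S l)) (XX eps l z))) as T3.
        split; lra.
      + assert (D : 2 <= Cmod (YY eps l z - acon (S l))).
        { pose proof (Cmod_rev_tri (YY eps l z) (acon (S l))) as T1. rewrite Cmod_acon in T1 by lia.
          assert (INR (S l) <= INR m) by (apply le_INR; lia). lra. }
        pose proof (Cmod_gfun_le (eps (S l)) (acon (S l)) (YY eps l z) 2 ep ltac:(lra) D) as G.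
        pose proof (Cmod_sub_tri (XX eps l z + gfun (eps (S l)) (acon (S l)) (YY eps l z))%C (XX eps l z) (XX eps j z)) as T3.
        replace (XX eps l z + gfun (eps (S l)) (acon (S l)) (YY eps l z) - XX eps l z)%C
          with (gfun (eps (S l)) (acon (S l)) (YY eps l z)) in T3 by ring.
        split; lra. }
  destruct (Inv (m - j)%nat ltac:(lia)) as [_ IY].
  replace (j + (m - j))%nat with m in IY by lia.
  pose proof (Ssum_le eps m He). pose proof (Ssum_nonneg eps j He). lra.
Qed.

Lemma trapX eps m j z : EpsHyp eps -> (j <= m)%nat -> 4 * INR m + 1 <= Cmod (XX eps j z) ->
  (forall k, (j < k <= m)%nat -> Nat.odd k = false -> 3 <= Cmod (YY eps j z - acon k)) ->
  4 * INR m < Cmod (XX eps m z).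
Proof.
  intros He hjm hXj hY.
  assert (Inv : forall i, (j + i <= m)%nat ->
     Cmod (YY eps (j + i) z - YY eps j z) <= Ssum eps (j + i) - Ssum eps j /\
     Cmod (XX eps j z) - (Ssum eps (j + i) - Ssum eps j) <= Cmod (XX eps (j + i) z)).
  { induction i as [|i IH]; intros hi.
    - rewrite Nat.add_0_r. replace (YY eps j z - YY eps j z)%C with (RtoC 0) by ring. rewrite Cmod_0. lra.
    - destruct (IH ltac:(lia)) as [IY IX].
      replace (j + S i)%nat with (S (j + i)) by lia. set (l := (j + i)%nat) in *.
      pose proof (Ssum_le eps l He) as S1. pose proof (Ssum_nonneg eps j He) as S2.
      pose proof (eps_pos eps (S l) He ltac:(lia)) as ep.
      rewrite Ssum_S. rewrite Pt_S. destruct (Nat.odd (S l)) eqn:Eo; simpl fst; simpl snd.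
      + assert (D : 2 <= Cmod (XX eps l z - acon (S l))).
        { pose proof (Cmod_rev_tri (XX eps l z) (acon (S l))) as T1. rewrite Cmod_acon in T1 by lia.
          assert (INR (S l) <= INR m) by (apply le_INR; lia). lra. }
        pose proof (Cmod_gfun_le (eps (S l)) (acon (S l)) (XX eps l z) 2 ep ltac:(lra) D) as G.
        pose proof (Cmod_sub_tri (YY eps l z + gfun (eps (S l)) (acon (S l)) (XX eps l z))%C (YY eps l z) (YY eps j z)) as T3.
        replace (YY eps l z + gfun (eps (S l)) (acon (S l)) (XX eps l z) - YY eps l z)%C
          with (gfun (eps (S l)) (acon (S l)) (XX eps l z)) in T3 by ring.
        split; lra.
      + assert (D : 2 <= Cmod (YY eps l z - acon (S l))).
        { pose proof (hY (S l) ltac:(lia) Eo) as T1. pose proof (Cmod_sub_tri (YY eps j z) (YY eps l z) (acon (S l))) as T2.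
          rewrite (Cmod_sub_sym (YY eps j z) (YY eps l z)) in T2. lra. }
        pose proof (Cmod_gfun_le (eps (S l)) (acon (S l)) (YY eps l z) 2 ep ltac:(lra) D) as G.
        pose proof (Cmod_plus_ge (XX eps l z) (gfun (eps (S l)) (acon (S l)) (YY eps l z))) as T3.
        split; lra. }
  destruct (Inv (m - j)%nat ltac:(lia)) as [_ IX].
  replace (j + (m - j))%nat with m in IX by lia.
  pose proof (Ssum_le eps m He). pose proof (Ssum_nonneg eps j He). lra.
Qed.

Definition KK eps m z : Prop :=
  Good acon eps m z /\ Cmod (XX eps m z) <= 4 * INR m /\ Cmod (YY eps m z) <= 4 * INR m.

Lemma inK_iff eps m z : (1 <= m)%nat -> (inK acon eps Rcon m z <-> KK eps m z).
Proof.
  intros hm. destruct m as [|m']; [lia|]. unfold inK, KK. split.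
  - intros [p [Hg HB]]. destruct (gamma_some _ _ _ _ _ Hg) as [-> Hgood].
    unfold inB, Rcon in HB. destruct HB. auto.
  - intros [Hgood [h1 h2]]. exists (Pt acon eps (S m') z). split. apply gamma_good; auto.
    unfold inB, Rcon. auto.
Qed.

Lemma eps_anti eps k m : EpsHyp eps -> (1 <= k <= m)%nat -> eps m <= eps k.
Proof. intros He [h1 h2]. induction h2. lra. destruct (He m ltac:(lia)) as [_ [_ h]]. lra. Qed.

Lemma Pt_0 eps z : Pt acon eps 0 z = (z, RtoC 0).
Proof. reflexivity. Qed.

Lemma z_bound eps m z : EpsHyp eps -> (1 <= m)%nat -> KK eps m z -> Cmod z <= 4 * INR m + 1.
Proof.
  intros He hm [Hg [hx hy]]. apply Rnot_lt_le. intro Hz.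
  pose proof (trapX eps m 0 z He ltac:(lia)) as T. rewrite Pt_0 in T. simpl fst in T. simpl snd in T.
  assert (4 * INR m < Cmod (XX eps m z)).
  { apply T. lra. intros k Hk Ho. replace (RtoC 0 - acon k)%C with (- acon k)%C by ring.
    rewrite Cmod_opp, Cmod_acon by lia.
    assert (k <> 1%nat) by (intro; subst; discriminate).
    assert (2 <= INR k) by (replace 2 with (INR 2) by (simpl; lra); apply le_INR; lia). lra. }
  lra.
Qed.

Definition gsh eps k z : C := gfun (eps k) (acon k) (argP k (Pt acon eps (k - 1) z)).

Lemma Pt_S_gsh eps j z : Pt acon eps (S j) z =
  if Nat.odd (S j) then (XX eps j z, YY eps j z + gsh eps (S j) z)%C
  else (XX eps j z + gsh eps (S j) z, YY eps j z)%C.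
Proof. unfold gsh. simpl (S j - 1)%nat. rewrite Nat.sub_0_r. rewrite Pt_S. unfold argP.
  destruct (Nat.odd (S j)); reflexivity. Qed.

Lemma accum eps z C0 j : 0 <= C0 ->
  (forall i, (1 <= i <= j)%nat -> Cmod (gsh eps i z) <= C0 * 3 ^ (i - 1)) ->
  Cmod (YY eps j z) <= C0 * (3 ^ j - 1) / 2 /\ Cmod (XX eps j z - z) <= C0 * (3 ^ j - 1) / 2.
Proof.
  intros hC H. induction j as [|j IH].
  - rewrite Pt_0. simpl. replace (z - z)%C with (RtoC 0) by ring. rewrite Cmod_0. lra.
  - destruct IH as [IY IX]. intros i Hi; apply H; lia.
    pose proof (H (S j) ltac:(lia)) as HS. simpl (S j - 1)%nat in HS. rewrite Nat.sub_0_r in HS.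
    assert (P : 0 <= C0 * 3 ^ j) by (apply Rmult_le_pos; [lra| apply pow_le; lra]).
    replace (C0 * (3 ^ S j - 1) / 2) with (C0 * (3 ^ j - 1) / 2 + C0 * 3 ^ j) by (simpl; field).
    rewrite Pt_S_gsh. destruct (Nat.odd (S j)); simpl fst; simpl snd.
    + split.
      * eapply Rle_trans. apply Cmod_triangle. lra.
      * lra.
    + split.
      * lra.
      * replace (XX eps j z + gsh eps (S j) z - z)%C with ((XX eps j z - z) + gsh eps (S j) z)%C by ring.
        eapply Rle_trans. apply Cmod_triangle. lra.
Qed.

Lemma arg_lt1 eps k z C0 j : EpsHyp eps -> (1 <= k)%nat -> 10 <= C0 -> 1 <= 3 ^ j ->
  argP k (Pt acon eps (k - 1) z) <> acon k -> C0 * 3 ^ j < Cmod (gsh eps k z) ->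
  Cmod (argP k (Pt acon eps (k - 1) z) - acon k) < 1.
Proof.
  intros He hk hC h3 hne Hg. unfold gsh in Hg. rewrite Cmod_gfun in Hg by (auto; apply (eps_pos eps k He hk)).
  pose proof (eps_le1 eps k He hk). pose proof (eps_pos eps k He hk).
  set (d := Cmod (argP k (Pt acon eps (k - 1) z) - acon k)) in *.
  assert (0 < d) by (unfold d; apply Cmod_pos_ne; apply Cminus_neq0; auto).
  apply Rnot_le_lt. intro Hd. 
  assert (eps k / d <= eps k) by (unfold Rdiv; rewrite <- (Rmult_1_r (eps k)) at 2; apply Rmult_le_compat_l; [lra|];
    rewrite <- Rinv_1; apply Rinv_le_contravar; lra).
  nra.
Qed.

Lemma far_acon u i k : (k < i)%nat -> Cmod (u - acon k) < 1 -> 3 <= Cmod (u - acon i).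
Proof.
  intros hki hu. pose proof (Cmod_acon_diff i k) as E.
  assert (INR k + 1 <= INR i) by (rewrite <- S_INR; apply le_INR; lia).
  rewrite Rabs_pos_eq in E by lra.
  pose proof (Cmod_sub_tri (acon i) u (acon k)). rewrite (Cmod_sub_sym (acon i) u) in H0. lra.
Qed.

Lemma nohuge eps m z : EpsHyp eps -> (1 <= m)%nat -> KK eps m z ->
  forall k, (1 <= k <= m)%nat -> Cmod (gsh eps k z) <= (8 * INR m + 10) * 3 ^ (k - 1).
Proof.
  intros He hm HK. set (C0 := 8 * INR m + 10).
  assert (hC : 10 <= C0) by (unfold C0; pose proof (pos_INR m); lra).
  assert (Hmain : forall k, (k <= m)%nat -> forall i, (1 <= i <= k)%nat -> Cmod (gsh eps i z) <= C0 * 3 ^ (i - 1)).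
  { induction k as [|j IH]; intros hk i Hi. lia.
    destruct (Nat.eq_dec i (S j)) as [->|Hne]; [|apply IH; lia].
    simpl (S j - 1)%nat. rewrite Nat.sub_0_r.
    apply Rnot_lt_le. intro Hbig.
    destruct (accum eps z C0 j ltac:(lra) (fun i Hi => IH ltac:(lia) i Hi)) as [AY AX].
    pose proof (z_bound eps m z He hm HK) as Hz.
    destruct HK as [Hg [hx hy]].
    assert (hne := Hg (S j) ltac:(lia)).
    assert (h3 : 1 <= 3 ^ j) by (apply pow_R1_Rle; lra).
    pose proof (arg_lt1 eps (S j) z C0 j He ltac:(lia) hC h3 hne Hbig) as Hlt.
    simpl (S j - 1)%nat in Hlt. rewrite Nat.sub_0_r in Hlt.
    assert (HC3 : C0 <= C0 * (3 ^ j + 1) / 2) by nra.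
    destruct (Nat.odd (S j)) eqn:Eo.
    - assert (E : YY eps (S j) z = (YY eps j z + gsh eps (S j) z)%C) by (rewrite Pt_S_gsh, Eo; reflexivity).
      assert (EX : XX eps (S j) z = XX eps j z) by (rewrite Pt_S_gsh, Eo; reflexivity).
      unfold argP in Hlt. rewrite Eo in Hlt.
      assert (4 * INR m < Cmod (YY eps m z)).
      { apply (trapY eps m (S j) z He hk).
        - rewrite E. pose proof (Cmod_plus_ge (gsh eps (S j) z) (YY eps j z)).
          rewrite Cplus_comm in H. unfold C0 in *. lra.
        - intros i' Hi' Hoi. rewrite EX. apply (far_acon _ i' (S j)); auto. lia. }
      lra.
    - assert (E : XX eps (S j) z = (XX eps j z + gsh eps (S j) z)%C) by (rewrite Pt_S_gsh, Eo; reflexivity).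
      assert (EY : YY eps (S j) z = YY eps j z) by (rewrite Pt_S_gsh, Eo; reflexivity).
      unfold argP in Hlt. rewrite Eo in Hlt.
      assert (4 * INR m < Cmod (XX eps m z)).
      { apply (trapX eps m (S j) z He hk).
        - rewrite E. pose proof (Cmod_plus_ge (gsh eps (S j) z) (XX eps j z)).
          rewrite Cplus_comm in H.
          pose proof (Cmod_sub_tri (XX eps j z) z (RtoC 0)).
          replace (XX eps j z - RtoC 0)%C with (XX eps j z) in H0 by ring.
          replace (z - RtoC 0)%C with z in H0 by ring.
          unfold C0 in *. lra.
        - intros i' Hi' Hoi. rewrite EY. apply (far_acon _ i' (S j)); auto. lia. }
      lra. }
  intros k Hk. apply (Hmain m (le_n m) k Hk).
Qed.

Definition Dm eps m := eps m / ((8 * INR m + 10) * 3 ^ m).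

Lemma d_lower eps m z k : EpsHyp eps -> (1 <= m)%nat -> KK eps m z -> (1 <= k <= m)%nat ->
  Dm eps m <= Cmod (argP k (Pt acon eps (k - 1) z) - acon k).
Proof.
  intros He hm HK Hk. pose proof (nohuge eps m z He hm HK k Hk) as Hn.
  destruct HK as [Hg _]. pose proof (Hg k Hk) as hne.
  unfold gsh in Hn. rewrite Cmod_gfun in Hn by (auto; apply (eps_pos eps k He ltac:(lia))).
  set (d := Cmod (argP k (Pt acon eps (k - 1) z) - acon k)) in *.
  assert (0 < d) by (unfold d; apply Cmod_pos_ne; apply Cminus_neq0; auto).
  pose proof (eps_anti eps k m He Hk). pose proof (eps_pos eps m He hm).
  set (C0 := 8 * INR m + 10) in *. assert (10 <= C0) by (unfold C0; pose proof (pos_INR m); lra).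
  assert (3 ^ (k - 1) <= 3 ^ m) by (apply Rle_pow; [lra|lia]).
  assert (1 <= 3 ^ (k - 1)) by (apply pow_R1_Rle; lra).
  unfold Dm. fold C0.
  apply Rle_trans with (eps k / (C0 * 3 ^ (k - 1))).
  - unfold Rdiv. apply Rmult_le_compat; try lra. left; apply Rinv_0_lt_compat; nra.
    apply Rinv_le_contravar; nra.
  - unfold Rdiv in *. apply Rmult_le_reg_r with (C0 * 3 ^ (k - 1) / d). apply Rdiv_lt_0_compat; nra.
    replace (eps k * / (C0 * 3 ^ (k - 1)) * (C0 * 3 ^ (k - 1) / d)) with (eps k / d) by (field; nra).
    replace (d * (C0 * 3 ^ (k - 1) / d)) with (C0 * 3 ^ (k - 1)) by (field; lra). unfold Rdiv. lra.
Qed.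

Lemma norm2_fst (p : C2) : Cmod (fst p) <= norm2 p.
Proof. unfold norm2. apply Rle_trans with (sqrt (Cmod (fst p) ^ 2)).
  right; symmetry; apply sqrt_pow2; apply Cmod_ge_0.
  apply sqrt_le_1_alt. pose proof (pow2_ge_0 (Cmod (snd p))). lra. Qed.
Lemma norm2_snd (p : C2) : Cmod (snd p) <= norm2 p.
Proof. unfold norm2. apply Rle_trans with (sqrt (Cmod (snd p) ^ 2)).
  right; symmetry; apply sqrt_pow2; apply Cmod_ge_0.
  apply sqrt_le_1_alt. pose proof (pow2_ge_0 (Cmod (fst p))). lra. Qed.
Lemma norm2_le_sum (p : C2) : norm2 p <= Cmod (fst p) + Cmod (snd p).
Proof. unfold norm2. pose proof (Cmod_ge_0 (fst p)). pose proof (Cmod_ge_0 (snd p)).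
  apply Rle_trans with (sqrt ((Cmod (fst p) + Cmod (snd p)) ^ 2)).
  apply sqrt_le_1_alt. nra. right. apply sqrt_pow2. lra. Qed.
Lemma norm2_nonneg (p : C2) : 0 <= norm2 p.
Proof. apply sqrt_pos. Qed.

Lemma gfun_diff e a u v : 0 < e -> u <> a -> v <> a ->
  Cmod (gfun e a u - gfun e a v) = e * Cmod (u - v) / (Cmod (u - a) * Cmod (v - a)).
Proof.
  intros he hu hv. unfold gfun.
  replace (RtoC e / (u - a) - RtoC e / (v - a))%C with (RtoC e * (v - u) / ((u - a) * (v - a)))%C
    by (field; split; apply Cminus_neq0; auto).
  rewrite Cmod_div by (apply Cmult_neq_0; apply Cminus_neq0; auto).
  rewrite !Cmod_mult, Cmod_R, Rabs_pos_eq by lra. rewrite (Cmod_sub_sym v u). reflexivity.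
Qed.

Lemma gfun_diff_le e a u v D : 0 < e -> e <= 1 -> 0 < D -> D <= Cmod (u - a) -> D <= Cmod (v - a) ->
  Cmod (gfun e a u - gfun e a v) <= Cmod (u - v) / (D * D).
Proof.
  intros he he1 hD hu hv.
  assert (u <> a). { intro E; subst. replace (a - a)%C with (RtoC 0) in hu by ring. rewrite Cmod_0 in hu. lra. }
  assert (v <> a). { intro E; subst. replace (a - a)%C with (RtoC 0) in hv by ring. rewrite Cmod_0 in hv. lra. }
  rewrite gfun_diff by auto. pose proof (Cmod_ge_0 (u - v)).
  unfold Rdiv. rewrite Rmult_assoc.
  apply Rle_trans with (1 * (Cmod (u - v) * / (Cmod (u - a) * Cmod (v - a)))).
  apply Rmult_le_compat_r; auto. apply Rmult_le_pos; auto. left; apply Rinv_0_lt_compat; nra.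
  rewrite Rmult_1_l. apply Rmult_le_compat_l; auto. apply Rinv_le_contravar. nra. apply Rmult_le_compat; lra.
Qed.

Definition Dl eps k z w := Rmax (Cmod (XX eps k z - XX eps k w)) (Cmod (YY eps k z - YY eps k w)).

Lemma Dl_nonneg eps k z w : 0 <= Dl eps k z w.
Proof. unfold Dl. eapply Rle_trans; [apply Cmod_ge_0|apply Rmax_l]. Qed.

Lemma max_step A B Y K : 0 <= A -> 0 <= K -> Y <= B + A * K -> Rmax A Y <= (1 + K) * Rmax A B.
Proof.
  intros hA hK hY. pose proof (Rmax_l A B). pose proof (Rmax_r A B).
  assert (A * K <= Rmax A B * K) by (apply Rmult_le_compat_r; lra).
  assert (0 <= Rmax A B * K) by (apply Rmult_le_pos; lra).
  apply Rmax_lub; nra.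
Qed.

Lemma back_step eps j z w D : EpsHyp eps -> 0 < D ->
  D <= Cmod (argP (S j) (Pt acon eps j z) - acon (S j)) ->
  D <= Cmod (argP (S j) (Pt acon eps j w) - acon (S j)) ->
  Dl eps j z w <= (1 + 1 / (D * D)) * Dl eps (S j) z w.
Proof.
  intros He hD hz hw.
  pose proof (eps_pos eps (S j) He ltac:(lia)). pose proof (eps_le1 eps (S j) He ltac:(lia)).
  assert (hD2 : 0 < D * D) by nra.
  assert (hK : 0 <= 1 / (D * D)) by (unfold Rdiv; rewrite Rmult_1_l; left; apply Rinv_0_lt_compat; lra).
  unfold Dl. rewrite !Pt_S. unfold argP in hz, hw. destruct (Nat.odd (S j)); simpl fst; simpl snd.
  - pose proof (gfun_diff_le (eps (S j)) (acon (S j)) (XX eps j z) (XX eps j w) D ltac:(lra) ltac:(lra) hD hz hw) as G.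
    apply max_step; auto. apply Cmod_ge_0.
    replace (YY eps j z - YY eps j w)%C with
      ((YY eps j z + gfun (eps (S j)) (acon (S j)) (XX eps j z) - (YY eps j w + gfun (eps (S j)) (acon (S j)) (XX eps j w)))
        - (gfun (eps (S j)) (acon (S j)) (XX eps j z) - gfun (eps (S j)) (acon (S j)) (XX eps j w)))%C by ring.
    eapply Rle_trans. unfold Cminus at 1. apply Cmod_triangle. rewrite Cmod_opp.
    unfold Rdiv in G |- *. rewrite Rmult_1_l. lra.
  - pose proof (gfun_diff_le (eps (S j)) (acon (S j)) (YY eps j z) (YY eps j w) D ltac:(lra) ltac:(lra) hD hz hw) as G.
    rewrite (Rmax_comm (Cmod (XX eps j z - XX eps j w))).
    rewrite (Rmax_comm (Cmod (XX eps j z + _ - _)%C)).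
    apply max_step; auto. apply Cmod_ge_0.
    replace (XX eps j z - XX eps j w)%C with
      ((XX eps j z + gfun (eps (S j)) (acon (S j)) (YY eps j z) - (XX eps j w + gfun (eps (S j)) (acon (S j)) (YY eps j w)))
        - (gfun (eps (S j)) (acon (S j)) (YY eps j z) - gfun (eps (S j)) (acon (S j)) (YY eps j w)))%C by ring.
    eapply Rle_trans. unfold Cminus at 1. apply Cmod_triangle. rewrite Cmod_opp.
    unfold Rdiv in G |- *. rewrite Rmult_1_l. lra.
Qed.

Lemma Dm_pos eps m : EpsHyp eps -> (1 <= m)%nat -> 0 < Dm eps m.
Proof. intros He hm. unfold Dm. apply Rdiv_lt_0_compat. apply eps_pos; auto.
  apply Rmult_lt_0_compat. pose proof (pos_INR m); lra. apply pow_lt; lra. Qed.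

Lemma Dl_norm2 eps n z w : Dl eps n z w <= norm2 (sub2 (Pt acon eps n z) (Pt acon eps n w)).
Proof. unfold Dl. apply Rmax_lub.
  - apply (norm2_fst (sub2 (Pt acon eps n z) (Pt acon eps n w))).
  - apply (norm2_snd (sub2 (Pt acon eps n z) (Pt acon eps n w))). Qed.

Lemma lip_K eps n z w : EpsHyp eps -> (1 <= n)%nat -> KK eps n z -> KK eps n w ->
  Cmod (z - w) <= (1 + 1 / (Dm eps n * Dm eps n)) ^ n * norm2 (sub2 (Pt acon eps n z) (Pt acon eps n w)).
Proof.
  intros He hn Kz Kw. set (D := Dm eps n). assert (hD : 0 < D) by (apply Dm_pos; auto).
  set (L := 1 + 1 / (D * D)).
  assert (hL : 1 <= L). { unfold L. assert (0 <= 1 / (D * D)). unfold Rdiv; rewrite Rmult_1_l; left; apply Rinv_0_lt_compat; nra. lra. }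
  assert (Cl : forall k, (k <= n)%nat -> Dl eps 0 z w <= L ^ k * Dl eps k z w).
  { induction k as [|k IH]; intros hk.
    - simpl. lra.
    - eapply Rle_trans. apply IH. lia. simpl.
      pose proof (d_lower eps n z (S k) He hn Kz ltac:(lia)) as dz.
      pose proof (d_lower eps n w (S k) He hn Kw ltac:(lia)) as dw.
      simpl (S k - 1)%nat in dz, dw. rewrite Nat.sub_0_r in dz, dw.
      pose proof (back_step eps k z w D He hD dz dw) as B. fold L in B.
      assert (0 <= L ^ k) by (apply pow_le; lra).
      replace (L * L ^ k * Dl eps (S k) z w) with (L ^ k * (L * Dl eps (S k) z w)) by ring.
      apply Rmult_le_compat_l; auto. }
  assert (H0 : Cmod (z - w) <= Dl eps 0 z w) by (unfold Dl; simpl; apply Rmax_l).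
  pose proof (Cl n (le_n n)). pose proof (Dl_norm2 eps n z w).
  assert (0 <= L ^ n) by (apply pow_le; lra).
  eapply Rle_trans. exact H0. eapply Rle_trans. exact H. apply Rmult_le_compat_l; auto.
Qed.

Lemma fwd_step eps j z w D : EpsHyp eps -> 0 < D ->
  D <= Cmod (argP (S j) (Pt acon eps j z) - acon (S j)) ->
  D <= Cmod (argP (S j) (Pt acon eps j w) - acon (S j)) ->
  Dl eps (S j) z w <= (1 + 1 / (D * D)) * Dl eps j z w.
Proof.
  intros He hD hz hw.
  pose proof (eps_pos eps (S j) He ltac:(lia)). pose proof (eps_le1 eps (S j) He ltac:(lia)).
  assert (hD2 : 0 < D * D) by nra.
  assert (hK : 0 <= 1 / (D * D)) by (unfold Rdiv; rewrite Rmult_1_l; left; apply Rinv_0_lt_compat; lra).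
  unfold Dl. rewrite !Pt_S. unfold argP in hz, hw. destruct (Nat.odd (S j)); simpl fst; simpl snd.
  - pose proof (gfun_diff_le (eps (S j)) (acon (S j)) (XX eps j z) (XX eps j w) D ltac:(lra) ltac:(lra) hD hz hw) as G.
    apply max_step; auto. apply Cmod_ge_0.
    replace (YY eps j z + gfun (eps (S j)) (acon (S j)) (XX eps j z) - (YY eps j w + gfun (eps (S j)) (acon (S j)) (XX eps j w)))%C
      with ((YY eps j z - YY eps j w) + (gfun (eps (S j)) (acon (S j)) (XX eps j z) - gfun (eps (S j)) (acon (S j)) (XX eps j w)))%C by ring.
    eapply Rle_trans. apply Cmod_triangle.
    unfold Rdiv in G |- *. rewrite Rmult_1_l. lra.
  - pose proof (gfun_diff_le (eps (S j)) (acon (S j)) (YY eps j z) (YY eps j w) D ltac:(lra) ltac:(lra) hD hz hw) as G.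
    rewrite (Rmax_comm (Cmod (XX eps j z - XX eps j w))).
    rewrite (Rmax_comm (Cmod (XX eps j z + _ - _)%C)).
    apply max_step; auto. apply Cmod_ge_0.
    replace (XX eps j z + gfun (eps (S j)) (acon (S j)) (YY eps j z) - (XX eps j w + gfun (eps (S j)) (acon (S j)) (YY eps j w)))%C
      with ((XX eps j z - XX eps j w) + (gfun (eps (S j)) (acon (S j)) (YY eps j z) - gfun (eps (S j)) (acon (S j)) (YY eps j w)))%C by ring.
    eapply Rle_trans. apply Cmod_triangle.
    unfold Rdiv in G |- *. rewrite Rmult_1_l. lra.
Qed.

Definition Qf eps n := 1 + 1 / ((Dm eps (n - 1) / 2) * (Dm eps (n - 1) / 2)).
Definition rho eps n := Rmin (Dm eps (n - 1) / 2) (1 / 2) / (Qf eps n) ^ (n - 1).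

Lemma rho_pos eps n : EpsHyp eps -> (2 <= n)%nat -> 0 < rho eps n.
Proof. intros He hn. pose proof (Dm_pos eps (n - 1) He ltac:(lia)).
  unfold rho, Qf. apply Rdiv_lt_0_compat. apply Rmin_pos; lra. apply pow_lt.
  assert (0 <= 1 / (Dm eps (n - 1) / 2 * (Dm eps (n - 1) / 2))).
  { unfold Rdiv; rewrite Rmult_1_l. left; apply Rinv_0_lt_compat. nra. } lra. Qed.

Lemma argP_close eps k z w : Cmod (argP (S k) (Pt acon eps k w) - argP (S k) (Pt acon eps k z)) <= Dl eps k w z.
Proof. unfold argP, Dl. destruct (Nat.odd (S k)). apply Rmax_l. apply Rmax_r. Qed.

Lemma nbhd eps n z w : EpsHyp eps -> (2 <= n)%nat -> KK eps (n - 1) z -> Cmod (w - z) <= rho eps n ->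
  KK eps n w.
Proof.
  intros He hn Kz Hw. set (m := (n - 1)%nat) in *.
  assert (hm : (1 <= m)%nat) by (unfold m; lia).
  set (D := Dm eps m). assert (hD : 0 < D) by (apply Dm_pos; auto).
  set (Q := Qf eps n). assert (EQ : Q = 1 + 1 / ((D / 2) * (D / 2))) by reflexivity.
  assert (hQ : 1 <= Q). { rewrite EQ. assert (0 <= 1 / (D / 2 * (D / 2))). unfold Rdiv; rewrite Rmult_1_l; left; apply Rinv_0_lt_compat; nra. lra. }
  set (r := rho eps n) in *.
  assert (Er : r * Q ^ m = Rmin (D / 2) (1 / 2)).
  { unfold r, rho. fold m. fold D. fold Q. field. apply pow_nonzero. lra. }
  assert (hr : 0 <= r) by (unfold r; left; apply rho_pos; auto).
  assert (Cl : forall k, (k <= m)%nat ->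
     (forall i, (1 <= i <= k)%nat -> argP i (Pt acon eps (i - 1) w) <> acon i) /\ Dl eps k w z <= r * Q ^ k).
  { induction k as [|k IH]; intros hk.
    - split. intros; lia. unfold Dl. rewrite !Pt_0. cbn [fst snd pow].
      replace (RtoC 0 - RtoC 0)%C with (RtoC 0) by ring. rewrite Cmod_0. rewrite Rmult_1_r.
      apply Rmax_lub; [exact Hw | exact hr].
    - destruct (IH ltac:(lia)) as [G1 G2].
      assert (QK : Q ^ k <= Q ^ m) by (apply Rle_pow; auto; lia).
      assert (Dlk : Dl eps k w z <= D / 2).
      { eapply Rle_trans. exact G2. apply Rle_trans with (r * Q ^ m). apply Rmult_le_compat_l; auto.
        rewrite Er. apply Rmin_l. }
      pose proof (d_lower eps m z (S k) He hm Kz ltac:(lia)) as dz. fold D in dz.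
      simpl (S k - 1)%nat in dz. rewrite Nat.sub_0_r in dz.
      pose proof (argP_close eps k z w) as AC.
      assert (dw : D / 2 <= Cmod (argP (S k) (Pt acon eps k w) - acon (S k))).
      { pose proof (Cmod_sub_tri (argP (S k) (Pt acon eps k z)) (argP (S k) (Pt acon eps k w)) (acon (S k))) as T.
        rewrite (Cmod_sub_sym (argP (S k) (Pt acon eps k z)) (argP (S k) (Pt acon eps k w))) in T. lra. }
      split.
      + intros i Hi. destruct (Nat.eq_dec i (S k)) as [->|Hne]; [|apply G1; lia].
        simpl (S k - 1)%nat. rewrite Nat.sub_0_r. intro E. rewrite E in dw.
        replace (acon (S k) - acon (S k))%C with (RtoC 0) in dw by ring. rewrite Cmod_0 in dw. lra.
      + pose proof (fwd_step eps k w z (D / 2) He ltac:(lra) dw ltac:(lra)) as F.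
        rewrite <- EQ in F. simpl. eapply Rle_trans. exact F.
        replace (r * (Q * Q ^ k)) with (Q * (r * Q ^ k)) by ring. apply Rmult_le_compat_l; lra. }
  destruct (Cl m (le_n m)) as [Gm Dlm].
  assert (Dm2 : Dl eps m w z <= 1 / 2) by (rewrite Er in Dlm; pose proof (Rmin_r (D / 2) (1 / 2)); lra).
  destruct Kz as [_ [kx ky]].
  assert (wx : Cmod (XX eps m w) <= 4 * INR m + 1 / 2).
  { pose proof (Cmod_sub_tri (XX eps m w) (XX eps m z) (RtoC 0)). replace (XX eps m w - RtoC 0)%C with (XX eps m w) in H by ring.
    replace (XX eps m z - RtoC 0)%C with (XX eps m z) in H by ring. unfold Dl in Dm2. pose proof (Rmax_l (Cmod (XX eps m w - XX eps m z)) (Cmod (YY eps m w - YY eps m z))). lra. }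
  assert (wy : Cmod (YY eps m w) <= 4 * INR m + 1 / 2).
  { pose proof (Cmod_sub_tri (YY eps m w) (YY eps m z) (RtoC 0)). replace (YY eps m w - RtoC 0)%C with (YY eps m w) in H by ring.
    replace (YY eps m z - RtoC 0)%C with (YY eps m z) in H by ring. unfold Dl in Dm2. pose proof (Rmax_r (Cmod (XX eps m w - XX eps m z)) (Cmod (YY eps m w - YY eps m z))). lra. }
  assert (En : n = S m) by (unfold m; lia).
  assert (an : Cmod (acon (S m)) = 4 * INR m + 2) by (rewrite Cmod_acon by lia; rewrite S_INR; ring).
  assert (dn : 3 / 2 <= Cmod (argP (S m) (Pt acon eps m w) - acon (S m))).
  { pose proof (Cmod_rev_tri (acon (S m)) (argP (S m) (Pt acon eps m w))). rewrite Cmod_sub_sym in H.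
    unfold argP in *. destruct (Nat.odd (S m)); lra. }
  pose proof (eps_pos eps (S m) He ltac:(lia)) as ep. pose proof (eps_le1 eps (S m) He ltac:(lia)) as ep1.
  pose proof (Cmod_gfun_le (eps (S m)) (acon (S m)) (argP (S m) (Pt acon eps m w)) (3 / 2) ep ltac:(lra) dn) as G.
  assert (G' : Cmod (gfun (eps (S m)) (acon (S m)) (argP (S m) (Pt acon eps m w))) <= 1 / 8).
  { eapply Rle_trans. exact G. apply Rle_trans with (eps (S m) / 1). unfold Rdiv. apply Rmult_le_compat_l. lra.
    apply Rinv_le_contravar; lra. unfold Rdiv. rewrite Rinv_1. lra. }
  rewrite En. split; [|split].
  - intros i Hi. destruct (Nat.eq_dec i (S m)) as [->|Hne]; [|apply Gm; lia].
    simpl (S m - 1)%nat. rewrite Nat.sub_0_r. intro E. rewrite E in dn.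
    replace (acon (S m) - acon (S m))%C with (RtoC 0) in dn by ring. rewrite Cmod_0 in dn. lra.
  - rewrite S_INR. rewrite Pt_S. unfold argP in G'. destruct (Nat.odd (S m)); simpl fst.
    + lra.
    + eapply Rle_trans. apply Cmod_triangle. lra.
  - rewrite S_INR. rewrite Pt_S. unfold argP in G'. destruct (Nat.odd (S m)); simpl snd.
    + eapply Rle_trans. apply Cmod_triangle. lra.
    + lra.
Qed.

Lemma gfun_deriv (f : C -> C) e a z : ex_derive f z -> f z <> a -> ex_derive (fun w => gfun e a (f w)) z.
Proof.
  intros [l Hl] hne. eexists. unfold gfun, Cdiv.
  apply CD_mult. apply CD_const. apply CD_inv. apply CD_minus. exact Hl. apply CD_const.
  apply Cminus_neq0; auto.
Qed.

Lemma ex_derive_ext_C (f g : C -> C) z : (forall w, f w = g w) -> ex_derive f z -> ex_derive g z.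
Proof. intros E [l Hl]. exists l. apply (is_derive_ext f g); auto. Qed.

Lemma ex_derive_Cplus (f g : C -> C) z : ex_derive f z -> ex_derive g z -> ex_derive (fun w => f w + g w)%C z.
Proof. intros [a Ha] [b Hb]. eexists. apply CD_plus; eauto. Qed.

Lemma Pt_deriv eps n z : Good acon eps n z ->
  ex_derive (fun w => XX eps n w) z /\ ex_derive (fun w => YY eps n w) z.
Proof.
  induction n as [|m IH]; intros Hg.
  - split.
    + apply (ex_derive_ext_C (fun w => w)). intros; reflexivity. eexists; apply CD_id.
    + apply (ex_derive_ext_C (fun _ => RtoC 0)). intros; reflexivity. eexists; apply CD_const.
  - assert (Hgm : Good acon eps m z) by (intros k Hk; apply Hg; lia).
    destruct (IH Hgm) as [DX DY].
    pose proof (Hg (S m) ltac:(lia)) as hne. simpl (S m - 1)%nat in hne. rewrite Nat.sub_0_r in hne.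
    unfold argP in hne. destruct (Nat.odd (S m)) eqn:Eo.
    + split.
      * apply (ex_derive_ext_C (fun w => XX eps m w)). intros w. rewrite Pt_S, Eo. reflexivity. auto.
      * apply (ex_derive_ext_C (fun w => YY eps m w + gfun (eps (S m)) (acon (S m)) (XX eps m w))%C).
        intros w. rewrite Pt_S, Eo. reflexivity.
        apply ex_derive_Cplus; auto. apply gfun_deriv; auto.
    + split.
      * apply (ex_derive_ext_C (fun w => XX eps m w + gfun (eps (S m)) (acon (S m)) (YY eps m w))%C).
        intros w. rewrite Pt_S, Eo. reflexivity.
        apply ex_derive_Cplus; auto. apply gfun_deriv; auto.
      * apply (ex_derive_ext_C (fun w => YY eps m w)). intros w. rewrite Pt_S, Eo. reflexivity. auto.
Qed.

Definition Lam eps n := (1 + 1 / (Dm eps n * Dm eps n)) ^ n.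

Lemma Lam_ge1 eps n : EpsHyp eps -> (1 <= n)%nat -> 1 <= Lam eps n.
Proof. intros He hn. unfold Lam. apply pow_R1_Rle. pose proof (Dm_pos eps n He hn).
  assert (0 <= 1 / (Dm eps n * Dm eps n)) by (unfold Rdiv; rewrite Rmult_1_l; left; apply Rinv_0_lt_compat; nra). lra. Qed.

Lemma lip_K2 eps n z w : EpsHyp eps -> (1 <= n)%nat -> KK eps n z -> KK eps n w ->
  Cmod (z - w) <= Lam eps n * (Cmod (XX eps n z - XX eps n w) + Cmod (YY eps n z - YY eps n w)).
Proof.
  intros He hn Kz Kw. pose proof (lip_K eps n z w He hn Kz Kw). pose proof (Lam_ge1 eps n He hn).
  eapply Rle_trans. exact H. fold (Lam eps n). apply Rmult_le_compat_l. lra.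
  apply (norm2_le_sum (sub2 (Pt acon eps n z) (Pt acon eps n w))).
Qed.

Lemma deriv_lower eps n z m1 m2 : EpsHyp eps -> (2 <= n)%nat -> KK eps (n - 1) z ->
  is_derive (fun w => XX eps n w) z m1 -> is_derive (fun w => YY eps n w) z m2 ->
  1 <= Lam eps n * (Cmod m1 + Cmod m2).
Proof.
  intros He hn Kz H1 H2.
  pose proof (rho_pos eps n He hn) as hr. pose proof (Lam_ge1 eps n He ltac:(lia)) as hL.
  assert (Kz' : KK eps n z) by (apply (nbhd eps n z z He hn Kz); replace (z - z)%C with (RtoC 0) by ring; rewrite Cmod_0; lra).
  assert (Key : forall e, 0 < e -> 1 <= Lam eps n * (Cmod m1 + Cmod m2 + 2 * e)).
  { intros e he.
    destruct (deriv_eps _ _ _ H1 e he) as [d1 [hd1 D1]].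
    destruct (deriv_eps _ _ _ H2 e he) as [d2 [hd2 D2]].
    set (r := Rmin (Rmin d1 d2) (rho eps n) / 2).
    assert (hr0 : 0 < r) by (unfold r; apply Rdiv_lt_0_compat; [repeat apply Rmin_pos|]; lra).
    pose proof (Rmin_l (Rmin d1 d2) (rho eps n)). pose proof (Rmin_r (Rmin d1 d2) (rho eps n)).
    pose proof (Rmin_l d1 d2). pose proof (Rmin_r d1 d2).
    set (w := (z + RtoC r)%C).
    assert (Ew : Cmod (w - z) = r) by (unfold w; replace (z + RtoC r - z)%C with (RtoC r) by ring; rewrite Cmod_R; apply Rabs_pos_eq; lra).
    assert (Kw : KK eps n w) by (apply (nbhd eps n z w He hn Kz); unfold r in Ew; lra).
    pose proof (lip_K2 eps n w z He ltac:(lia) Kw Kz') as L.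
    rewrite Ew in L.
    specialize (D1 w ltac:(unfold r in Ew; lra)). specialize (D2 w ltac:(unfold r in Ew; lra)).
    rewrite Ew in D1, D2.
    assert (B1 : Cmod (XX eps n w - XX eps n z) <= (Cmod m1 + e) * r).
    { replace (XX eps n w - XX eps n z)%C with ((XX eps n w - XX eps n z - m1 * (w - z)) + m1 * (w - z))%C by ring.
      eapply Rle_trans. apply Cmod_triangle. rewrite Cmod_mult, Ew. lra. }
    assert (B2 : Cmod (YY eps n w - YY eps n z) <= (Cmod m2 + e) * r).
    { replace (YY eps n w - YY eps n z)%C with ((YY eps n w - YY eps n z - m2 * (w - z)) + m2 * (w - z))%C by ring.
      eapply Rle_trans. apply Cmod_triangle. rewrite Cmod_mult, Ew. lra. }
    assert (r <= Lam eps n * ((Cmod m1 + Cmod m2 + 2 * e) * r)).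
    { eapply Rle_trans. exact L. apply Rmult_le_compat_l. lra. lra. }
    apply Rmult_le_reg_r with r; auto. lra. }
  apply Rnot_lt_le. intro Hc.
  set (g := (1 - Lam eps n * (Cmod m1 + Cmod m2)) / (4 * Lam eps n)).
  assert (hg : 0 < g) by (unfold g; apply Rdiv_lt_0_compat; lra).
  specialize (Key g hg). unfold g in Key.
  assert (E : Lam eps n * (Cmod m1 + Cmod m2 + 2 * ((1 - Lam eps n * (Cmod m1 + Cmod m2)) / (4 * Lam eps n)))
     = Lam eps n * (Cmod m1 + Cmod m2) + (1 - Lam eps n * (Cmod m1 + Cmod m2)) / 2) by (field; lra).
  lra.
Qed.

Lemma KK_self eps n z : EpsHyp eps -> (2 <= n)%nat -> KK eps (n - 1) z -> KK eps n z.
Proof. intros He hn Kz. apply (nbhd eps n z z He hn Kz). replace (z - z)%C with (RtoC 0) by ring.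
  rewrite Cmod_0. left; apply rho_pos; auto. Qed.

Lemma phi_deriv_bound eps n (phi : C -> C) c z q l : EpsHyp eps -> (2 <= n)%nat -> KK eps (n - 1) z ->
  Cmod (q - z) <= rho eps n / 2 ->
  (forall w, KK eps n w -> ex_derive phi w /\ Cmod (phi w) <= c) ->
  is_derive phi q l -> Cmod l <= 16 * c / rho eps n.
Proof.
  intros He hn Kz Hq Hphi Hl. pose proof (rho_pos eps n He hn) as hr.
  assert (Kq : KK eps n q) by (apply (nbhd eps n z q He hn Kz); lra).
  destruct q as [q1 q2].
  replace (16 * c / rho eps n) with (2 * (2 * c) / (rho eps n / 4)) by (field; lra).
  apply (cauchy_est phi q1 q2 (rho eps n / 4) (2 * c) l); auto.
  - lra.
  - intros x y hx hy. apply Hphi. apply (nbhd eps n z (x, y) He hn Kz).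
    pose proof (Cmod_pair_sub x y q1 q2). pose proof (Cmod_sub_tri (x, y) (q1, q2) z). lra.
  - intros x y hx hy.
    assert (Kxy : KK eps n (x, y)).
    { apply (nbhd eps n z (x, y) He hn Kz).
      pose proof (Cmod_pair_sub x y q1 q2). pose proof (Cmod_sub_tri (x, y) (q1, q2) z). lra. }
    destruct (Hphi _ Kxy) as [_ B1]. destruct (Hphi _ Kq) as [_ B2].
    unfold Cminus. eapply Rle_trans. apply Cmod_triangle. rewrite Cmod_opp. lra.
Qed.

Lemma phi_lip eps n (phi : C -> C) c z w : EpsHyp eps -> (2 <= n)%nat -> KK eps (n - 1) z ->
  Cmod (w - z) <= rho eps n / 2 ->
  (forall w, KK eps n w -> ex_derive phi w /\ Cmod (phi w) <= c) ->
  Cmod (phi w - phi z) <= 16 * c / rho eps n * Cmod (w - z).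
Proof.
  intros He hn Kz Hw Hphi. pose proof (rho_pos eps n He hn) as hr.
  assert (hc : 0 <= c). { destruct (Hphi z (KK_self eps n z He hn Kz)) as [_ B]. pose proof (Cmod_ge_0 (phi z)). lra. }
  apply cmvt. apply Rmult_le_pos; [lra|]. left; apply Rinv_0_lt_compat; lra.
  intros t Ht.
  assert (Hp : Cmod (path z w t - z) <= rho eps n / 2).
  { replace z with (path z w 0) at 2 by (unfold path; ring). rewrite Cmod_path_diff.
    rewrite Rminus_0_r, Rabs_pos_eq by lra. pose proof (Cmod_ge_0 (w - z)). nra. }
  assert (Kp : KK eps n (path z w t)) by (apply (nbhd eps n z _ He hn Kz); lra).
  destruct (Hphi _ Kp) as [[l Hl] _]. exists l. split; auto.
  apply (phi_deriv_bound eps n phi c z (path z w t) l He hn Kz Hp Hphi Hl).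
Qed.

Lemma embed eps n h dl : EpsHyp eps -> (2 <= n)%nat -> dl <= rho eps n / (64 * Lam eps n) ->
  holo_off_poles acon eps n h ->
  (exists c, c < dl /\ forall z, inK acon eps Rcon n z ->
     exists p, gamma acon eps n z = Some p /\ norm2 (sub2 p (h z)) <= c) ->
  embedding_on (inK acon eps Rcon (n - 1)) h.
Proof.
  intros He hn Hdl Hh [c [Hc Hclose]].
  pose proof (rho_pos eps n He hn) as hr. pose proof (Lam_ge1 eps n He ltac:(lia)) as hL.
  set (rr := rho eps n) in *. set (L := Lam eps n) in *.
  assert (HLc : L * c < rr / 64).
  { assert (c < rr / (64 * L)) by lra.
    apply Rmult_lt_compat_l with (r := L) in H; [|lra].
    replace (L * (rr / (64 * L))) with (rr / 64) in H by (field; lra). exact H. }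
  assert (Kn1 : forall z, inK acon eps Rcon (n - 1) z -> KK eps (n - 1) z).
  { intros z Hz. apply inK_iff; auto. lia. }
  assert (Bd : forall w, KK eps n w ->
     Cmod (fst (h w) - XX eps n w) <= c /\ Cmod (snd (h w) - YY eps n w) <= c).
  { intros w Kw. destruct (Hclose w (proj2 (inK_iff eps n w ltac:(lia)) Kw)) as [p [Hg Hn]].
    destruct (gamma_some _ _ _ _ _ Hg) as [-> _].
    pose proof (norm2_fst (sub2 (Pt acon eps n w) (h w))). pose proof (norm2_snd (sub2 (Pt acon eps n w) (h w))).
    unfold sub2 in *. simpl in *. rewrite Cmod_sub_sym in H, H0. split; lra. }
  assert (Df : forall w, KK eps n w ->
     ex_derive (fun z => fst (h z)) w /\ ex_derive (fun z => snd (h z)) w /\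
     ex_derive (fun z => XX eps n z) w /\ ex_derive (fun z => YY eps n z) w).
  { intros w Kw. destruct Kw as [Hg _].
    assert (gamma acon eps n w <> None) by (rewrite gamma_good; auto; discriminate).
    destruct (Hh w H). destruct (Pt_deriv eps n w Hg). auto. }
  set (phi1 := fun z => (fst (h z) - XX eps n z)%C).
  set (phi2 := fun z => (snd (h z) - YY eps n z)%C).
  assert (P1 : forall w, KK eps n w -> ex_derive phi1 w /\ Cmod (phi1 w) <= c).
  { intros w Kw. destruct (Df w Kw) as [[a Ha] [_ [[b Hb] _]]]. split. exists (a - b)%C. apply CD_minus; auto.
    apply (Bd w Kw). }
  assert (P2 : forall w, KK eps n w -> ex_derive phi2 w /\ Cmod (phi2 w) <= c).
  { intros w Kw. destruct (Df w Kw) as [_ [[a Ha] [_ [b Hb]]]]. split. exists (a - b)%C. apply CD_minus; auto.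
    apply (Bd w Kw). }
  split.
  - intros z w Hz Hw Heq.
    pose proof (Kn1 z Hz) as Kz. pose proof (Kn1 w Hw) as Kw.
    pose proof (KK_self eps n z He hn Kz) as Kz'. pose proof (KK_self eps n w He hn Kw) as Kw'.
    assert (hc : 0 <= c) by (pose proof (Cmod_ge_0 (phi1 z)); pose proof (proj2 (P1 z Kz')); lra).
    pose proof (lip_K2 eps n z w He ltac:(lia) Kz' Kw') as Lp. fold L in Lp.
    assert (E1 : (XX eps n z - XX eps n w)%C = (phi1 w - phi1 z)%C) by (unfold phi1; rewrite Heq; ring).
    assert (E2 : (YY eps n z - YY eps n w)%C = (phi2 w - phi2 z)%C) by (unfold phi2; rewrite Heq; ring).
    rewrite E1, E2 in Lp.
    destruct (Rlt_le_dec (Cmod (w - z)) (rr / 2)) as [Hsm|Hbg].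
    + pose proof (phi_lip eps n phi1 c z w He hn Kz ltac:(fold rr; lra) P1) as M1.
      pose proof (phi_lip eps n phi2 c z w He hn Kz ltac:(fold rr; lra) P2) as M2.
      fold rr in M1, M2. rewrite (Cmod_sub_sym z w) in Lp.
      set (d := Cmod (w - z)) in *. pose proof (Cmod_ge_0 (w - z)). fold d in H.
      assert (d <= L * (2 * (16 * c / rr) * d)) by (eapply Rle_trans; [exact Lp|]; apply Rmult_le_compat_l; lra).
      assert (L * (2 * (16 * c / rr) * d) = (32 * (L * c) / rr) * d) by (field; lra).
      assert (32 * (L * c) / rr < 1 / 2).
      { apply Rmult_lt_reg_r with rr; auto. unfold Rdiv. rewrite Rmult_assoc, Rinv_l by lra. lra. }
      assert (d = 0) by nra.
      apply Cmod_eq_0 in H3. symmetry. replace w with ((w - z) + z)%C by ring. rewrite H3. ring.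
    + exfalso.
      assert (B1 : Cmod (phi1 w - phi1 z) <= 2 * c).
      { unfold Cminus. eapply Rle_trans. apply Cmod_triangle. rewrite Cmod_opp.
        pose proof (proj2 (P1 w Kw')). pose proof (proj2 (P1 z Kz')). lra. }
      assert (B2 : Cmod (phi2 w - phi2 z) <= 2 * c).
      { unfold Cminus. eapply Rle_trans. apply Cmod_triangle. rewrite Cmod_opp.
        pose proof (proj2 (P2 w Kw')). pose proof (proj2 (P2 z Kz')). lra. }
      rewrite (Cmod_sub_sym z w) in Lp.
      assert (Cmod (w - z) <= L * (4 * c)) by (eapply Rle_trans; [exact Lp|]; apply Rmult_le_compat_l; lra).
      lra.
  - intros z Hz. pose proof (Kn1 z Hz) as Kz. pose proof (KK_self eps n z He hn Kz) as Kz'.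
    assert (hc : 0 <= c) by (pose proof (Cmod_ge_0 (phi1 z)); pose proof (proj2 (P1 z Kz')); lra).
    destruct (Df z Kz') as [[l1 H1] [[l2 H2] [[m1 M1] [m2 M2]]]].
    exists l1, l2. split; auto. split; auto. intro E. injection E as E1 E2. subst l1 l2.
    assert (Q1 : is_derive phi1 z (RtoC 0 - m1)%C) by (apply CD_minus; auto).
    assert (Q2 : is_derive phi2 z (RtoC 0 - m2)%C) by (apply CD_minus; auto).
    assert (Hzz : Cmod (z - z) <= rr / 2) by (replace (z - z)%C with (RtoC 0) by ring; rewrite Cmod_0; lra).
    pose proof (phi_deriv_bound eps n phi1 c z z _ He hn Kz Hzz P1 Q1) as B1.
    pose proof (phi_deriv_bound eps n phi2 c z z _ He hn Kz Hzz P2 Q2) as B2.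
    replace (RtoC 0 - m1)%C with (- m1)%C in B1 by ring. replace (RtoC 0 - m2)%C with (- m2)%C in B2 by ring.
    rewrite Cmod_opp in B1, B2. fold rr in B1, B2.
    pose proof (deriv_lower eps n z m1 m2 He hn Kz M1 M2) as DL. fold L in DL.
    assert (L * (Cmod m1 + Cmod m2) <= L * (2 * (16 * c / rr))) by (apply Rmult_le_compat_l; lra).
    assert (L * (2 * (16 * c / rr)) = 32 * (L * c) / rr) by (field; lra).
    assert (32 * (L * c) / rr < 1 / 2).
    { apply Rmult_lt_reg_r with rr; auto. unfold Rdiv. rewrite Rmult_assoc, Rinv_l by lra. lra. }
    lra.
Qed.

Definition Dd (m : nat) (e : R) : R := e / ((8 * INR m + 10) * 3 ^ m).
Definition RhoV (n : nat) (e : R) : R :=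
  Rmin (Dd (n - 1) e / 2) (1 / 2) / (1 + 1 / ((Dd (n - 1) e / 2) * (Dd (n - 1) e / 2))) ^ (n - 1).
Definition LamV (n : nat) (e : R) : R := (1 + 1 / (Dd n e * Dd n e)) ^ n.

Fixpoint de (n : nat) : R * R :=
  match n with
  | O => (1 / 4, 1 / 64)
  | S m => (Rmin (fst (de m) / 2) (RhoV (S m) (snd (de m)) / (64 * LamV (S m) (fst (de m) / 4 ^ (S m + 3)))),
            fst (de m) / 4 ^ (S m + 3))
  end.
Definition dl (n : nat) : R := fst (de n).
Definition ep (n : nat) : R := snd (de n).

Lemma ep_S m : ep (S m) = dl m / 4 ^ (S m + 3).
Proof. reflexivity. Qed.
Lemma dl_S m : dl (S m) = Rmin (dl m / 2) (RhoV (S m) (ep m) / (64 * LamV (S m) (ep (S m)))).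
Proof. reflexivity. Qed.

Lemma Dd_pos m e : 0 < e -> 0 < Dd m e.
Proof. intros. unfold Dd. apply Rdiv_lt_0_compat; auto. apply Rmult_lt_0_compat. pose proof (pos_INR m); lra.
  apply pow_lt; lra. Qed.
Lemma one_plus_inv_sq x : 0 < x -> 1 <= 1 + 1 / (x * x).
Proof. intros. assert (0 <= 1 / (x * x)) by (unfold Rdiv; rewrite Rmult_1_l; left; apply Rinv_0_lt_compat; nra). lra. Qed.
Lemma RhoV_pos n e : 0 < e -> 0 < RhoV n e.
Proof. intros. unfold RhoV. pose proof (Dd_pos (n - 1) e H). apply Rdiv_lt_0_compat. apply Rmin_pos; lra.
  apply pow_lt. pose proof (one_plus_inv_sq (Dd (n - 1) e / 2) ltac:(lra)). lra. Qed.
Lemma LamV_pos n e : 0 < e -> 0 < LamV n e.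
Proof. intros. unfold LamV. apply pow_lt. pose proof (one_plus_inv_sq (Dd n e) (Dd_pos n e H)). lra. Qed.

Lemma de_pos n : 0 < dl n /\ 0 < ep n /\ dl n <= 1 / 4.
Proof.
  induction n as [|m [h1 [h2 h3]]].
  - unfold dl, ep; simpl. lra.
  - assert (h4 : 0 < 4 ^ (S m + 3)) by (apply pow_lt; lra).
    assert (he : 0 < ep (S m)) by (rewrite ep_S; apply Rdiv_lt_0_compat; lra).
    rewrite dl_S. split; [|split]; auto.
    + apply Rmin_pos. lra. apply Rdiv_lt_0_compat. apply RhoV_pos; auto.
      pose proof (LamV_pos (S m) (ep (S m)) he). lra.
    + eapply Rle_trans. apply Rmin_l. lra.
Qed.

Lemma dl_dec n : dl (S n) < dl n.
Proof. rewrite dl_S. destruct (de_pos n) as [h _]. pose proof (Rmin_l (dl n / 2) (RhoV (S n) (ep n) / (64 * LamV (S n) (ep (S n))))). lra. Qed.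

Lemma dl_anti j m : (j <= m)%nat -> dl m <= dl j.
Proof. intros h. induction h. lra. pose proof (dl_dec m). lra. Qed.

Lemma ep_hyp : EpsHyp ep.
Proof.
  intros k hk. destruct k as [|m]; [lia|].
  destruct (de_pos m) as [h1 [_ h3]].
  assert (h4 : 0 < 4 ^ (S m + 3)) by (apply pow_lt; lra).
  split; [|split].
  - rewrite ep_S. apply Rdiv_lt_0_compat; lra.
  - rewrite ep_S. replace (S m + 3)%nat with (m + 4)%nat by lia. rewrite pow_add.
    assert (2 ^ m <= 4 ^ m) by (apply pow_incr; lra).
    assert (0 < 2 ^ m) by (apply pow_lt; lra).
    simpl (4 ^ 4). simpl (2 ^ S m).
    apply Rle_trans with (1 / 4 / (4 ^ m * (4 * (4 * (4 * (4 * 1)))))).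
    + unfold Rdiv. apply Rmult_le_compat_r. left. apply Rinv_0_lt_compat. nra. lra.
    + unfold Rdiv. rewrite !Rmult_1_l. rewrite <- !Rinv_mult. apply Rinv_le_contravar. nra. nra.
  - rewrite !ep_S. pose proof (dl_dec m). destruct (de_pos (S m)) as [h5 _].
    assert (4 ^ (S m + 3) <= 4 ^ (S (S m) + 3)) by (apply Rle_pow; [lra|lia]).
    unfold Rdiv. apply Rmult_le_compat; try lra. left; apply Rinv_0_lt_compat. apply pow_lt; lra.
    apply Rinv_le_contravar; lra.
Qed.

Lemma rho_eq m : rho ep (S m) = RhoV (S m) (ep m).
Proof. unfold rho, RhoV, Qf, Dm, Dd. simpl (S m - 1)%nat. rewrite Nat.sub_0_r. reflexivity. Qed.
Lemma Lam_eq n : Lam ep n = LamV n (ep n).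
Proof. reflexivity. Qed.

Lemma le_of_lt_plus a b : (forall r, 0 < r -> a < b + r) -> a <= b.
Proof. intros H. apply Rnot_lt_le. intro Hc. specialize (H ((a - b) / 2) ltac:(lra)). lra. Qed.

Lemma sub2_fst p q : fst (sub2 p q) = (fst p - fst q)%C. Proof. reflexivity. Qed.
Lemma sub2_snd p q : snd (sub2 p q) = (snd p - snd q)%C. Proof. reflexivity. Qed.

Lemma inB_bound j b : inB Rcon j b -> Cmod (fst b) <= 4 * INR j /\ Cmod (snd b) <= 4 * INR j.
Proof.
  destruct j as [|j'].
  - simpl. intros ->. simpl. rewrite Cmod_0. lra.
  - simpl. unfold Rcon. intros [h1 h2]. split; auto.
Qed.

Lemma closure_bound j z : closure2 (inBnbhd Rcon j (1 / 2)) z ->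
  Cmod (fst z) <= 4 * INR j + 1 / 2 /\ Cmod (snd z) <= 4 * INR j + 1 / 2.
Proof.
  intros Hc. split; apply le_of_lt_plus; intros r hr; destruct (Hc r hr) as [w [[b [Hb Hwb]] Hzw]];
  destruct (inB_bound j b Hb) as [b1 b2].
  - pose proof (norm2_fst (sub2 z w)) as T1. pose proof (norm2_fst (sub2 w b)) as T2.
    rewrite sub2_fst in T1, T2.
    pose proof (Cmod_sub_tri (fst z) (fst w) (fst b)). pose proof (Cmod_sub_tri (fst z) (fst b) (RtoC 0)).
    replace (fst z - RtoC 0)%C with (fst z) in H0 by ring. replace (fst b - RtoC 0)%C with (fst b) in H0 by ring. lra.
  - pose proof (norm2_snd (sub2 z w)) as T1. pose proof (norm2_snd (sub2 w b)) as T2.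
    rewrite sub2_snd in T1, T2.
    pose proof (Cmod_sub_tri (snd z) (snd w) (snd b)). pose proof (Cmod_sub_tri (snd z) (snd b) (RtoC 0)).
    replace (snd z - RtoC 0)%C with (snd z) in H0 by ring. replace (snd b - RtoC 0)%C with (snd b) in H0 by ring. lra.
Qed.

Lemma fmap_bound eps n z : EpsHyp eps -> (1 <= n)%nat ->
  Cmod (fst z) <= 4 * INR (n - 1) + 1 / 2 -> Cmod (snd z) <= 4 * INR (n - 1) + 1 / 2 ->
  exists q, fmap n (acon n) (eps n) z = Some q /\ norm2 (sub2 q z) <= eps n.
Proof.
  intros He hn hx hy.
  assert (an : Cmod (acon n) = 4 * INR (n - 1) + 2).
  { rewrite Cmod_acon by auto. rewrite minus_INR by lia. simpl. lra. }
  assert (dn : 3 / 2 <= Cmod (argP n z - acon n)).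
  { pose proof (Cmod_rev_tri (acon n) (argP n z)). rewrite Cmod_sub_sym in H.
    unfold argP in *. destruct (Nat.odd n); lra. }
  assert (hne : argP n z <> acon n).
  { intro E. rewrite E in dn. replace (acon n - acon n)%C with (RtoC 0) in dn by ring. rewrite Cmod_0 in dn. lra. }
  pose proof (eps_pos eps n He hn) as ep0.
  pose proof (Cmod_gfun_le (eps n) (acon n) (argP n z) (3 / 2) ep0 ltac:(lra) dn) as G.
  assert (G' : Cmod (gfun (eps n) (acon n) (argP n z)) <= eps n).
  { eapply Rle_trans. exact G. unfold Rdiv. rewrite <- (Rmult_1_r (eps n)) at 2. apply Rmult_le_compat_l. lra.
    rewrite <- Rinv_1. apply Rinv_le_contravar; lra. }
  rewrite fmap_eq. apply Ceqb_false in hne. rewrite hne.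
  eexists. split. reflexivity.
  eapply Rle_trans. apply norm2_le_sum. rewrite sub2_fst, sub2_snd.
  unfold stepP, argP in *. destruct (Nat.odd n); simpl fst; simpl snd.
  - replace (fst z - fst z)%C with (RtoC 0) by ring. replace (snd z + gfun (eps n) (acon n) (fst z) - snd z)%C with (gfun (eps n) (acon n) (fst z)) by ring.
    rewrite Cmod_0. lra.
  - replace (snd z - snd z)%C with (RtoC 0) by ring. replace (fst z + gfun (eps n) (acon n) (snd z) - fst z)%C with (gfun (eps n) (acon n) (snd z)) by ring.
    rewrite Cmod_0. lra.
Qed.

Lemma ep_small j n : (j < n)%nat -> ep n < dl j * / 2 ^ (j + n).
Proof.
  intros h. destruct n as [|m]; [lia|]. rewrite ep_S.
  destruct (de_pos m) as [h1 _]. destruct (de_pos j) as [h2 _].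
  pose proof (dl_anti j m ltac:(lia)).
  assert (P : 2 ^ (j + S m) < 4 ^ (S m + 3)).
  { replace 4 with (2 ^ 2) by (simpl; lra). rewrite <- pow_mult. apply Rlt_pow. lra. lia. }
  assert (0 < 2 ^ (j + S m)) by (apply pow_lt; lra).
  unfold Rdiv. apply Rle_lt_trans with (dl j * / 4 ^ (S m + 3)).
  apply Rmult_le_compat_r. left; apply Rinv_0_lt_compat; lra. lra.
  apply Rmult_lt_compat_l; auto. apply Rinv_lt_contravar; nra.
Qed.

Theorem proposition3p3 :
  exists (a : nat -> C) (eps : nat -> R) (Rs : nat -> R) (delta : nat -> R),
    (* R_0 = 0 (B_0 = {(0,0)} is the bidisk of radius 0) *)
    Rs 0%nat = 0 /\
    (forall n : nat, (1 <= n)%nat -> 0 < eps n /\ 0 < Rs n) /\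
    (forall n : nat, (1 <= n)%nat ->
       Rs (n - 1)%nat < Cmod (a n) /\ Cmod (a n) < Rs n) /\
    (forall n : nat, 0 < delta n) /\
    (forall n : nat, delta (S n) < delta n) /\
    delta 0%nat = 1 / 4 /\
    (forall n : nat, (1 <= n)%nat ->
       (forall h : C -> C2,
          holo_off_poles a eps n h ->
          (exists c, c < delta n /\
             forall z, inK a eps Rs n z ->
               exists p, gamma a eps n z = Some p /\ norm2 (sub2 p (h z)) <= c) ->
          embedding_on (inK a eps Rs (n - 1)) h) /\
       (forall j : nat, (j < n)%nat ->
          exists c, c < delta j * / 2 ^ (j + n) /\
            forall z : C2, closure2 (inBnbhd Rs j (1 / 2)) z ->
              exists q, fmap n (a n) (eps n) z = Some q /\ norm2 (sub2 q z) <= c)).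
Proof.
  exists acon, ep, Rcon, dl.
  split; [|split; [|split; [|split; [|split; [|split]]]]].
  - unfold Rcon. simpl. ring.
  - intros n hn. split. apply (eps_pos ep n ep_hyp hn). unfold Rcon.
    apply lt_0_INR in hn. lra.
  - intros n hn. rewrite Cmod_acon by auto. unfold Rcon. rewrite minus_INR by lia. simpl. lra.
  - intros n. apply de_pos.
  - apply dl_dec.
  - reflexivity.
  - intros n hn. split.
    + intros h Hh Hc. destruct n as [|n']; [lia|]. destruct n' as [|m].
      * simpl. split; intros; contradiction.
      * apply (embed ep (S (S m)) h (dl (S (S m))) ep_hyp ltac:(lia)); auto.
        rewrite (dl_S (S m)), rho_eq, Lam_eq. apply Rmin_r.
    + intros j hj. exists (ep n). split. apply ep_small; auto.
      intros z Hz. destruct (closure_bound j z Hz) as [b1 b2].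
      assert (INR j <= INR (n - 1)) by (apply le_INR; lia).
      apply fmap_bound; auto. apply ep_hyp. lra. lra.
Qed.
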